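(* Let $H$ be a reduced double-well type potential with $H_\infty^0\le H_\infty^1$ and $0<\tfrac12(H_\infty^1+H_\infty^0)\le H_{min}^1+H_\infty^0$, and put $\gamma:=\tfrac12(H_\infty^0+H_\infty^1)$. Then, as $\beta\to+\infty$ (with $f\sim g$ meaning $f/g\to1$): $\lambda_\beta-1\sim c\,e^{-\beta\gamma}$; $F_\beta^0(\lambda_\beta)\sim\frac{e^{-\beta H_\infty^0}}{\lambda_\beta-1}\sim\frac1c e^{\beta(H_\infty^1-H_\infty^0)/2}$; $\tilde F_\beta^0(\lambda_\beta)\sim\frac{e^{-\beta H_\infty^0}}{(\lambda_\beta-1)^2}\sim\frac1{c^2}e^{\beta H_\infty^1}$; $F_\beta^1(\lambda_\beta)\sim c\,e^{-\beta(H_\infty^1-H_\infty^0)/2}$; $\tilde F_\beta^1(\lambda_\beta)\sim\frac{e^{-\beta H_\infty^1}}{(\lambda_\beta-1)^2}\sim\frac1{c^2}e^{\beta H_\infty^0}$; and consequently $\mu_\beta[0]/\mu_\beta[1]\to1/c^2$.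
   Context: $\Sigma:=\{0,1\}^{\mathbb N}$. A reduced double-well type potential is a continuous nonnegative $H:\Sigma\to\mathbb R$ with summable variation such that $H=0$ on $[00]\cup[11]$, $H=H_n^0>0$ on $[01^n0]$, $H=H_n^1>0$ on $[10^n1]$ ($n\ge1$), and $\sum_{k\ge1}\sup_{n\ge0}|H_k^i-H_{k+n}^i|<\infty$ ($i=0,1$). $H_\infty^i:=\lim_nH_n^i$, $H_{min}^i:=\inf_nH_n^i$. $\kappa:=\mathrm{card}\{n\ge1:\tfrac12(H_\infty^1+H_\infty^0)=H_n^1+H_\infty^0\}$, $c:=\frac{\kappa+\sqrt{\kappa^2+4}}2$. $\mathcal L_\beta[\Phi](x)=e^{-\beta H(0x)}\Phi(0x)+e^{-\beta H(1x)}\Phi(1x)$; $\Phi_\beta$ its unique positive continuous eigenfunction with $\max\Phi_\beta=1$, eigenvalue $\lambda_\beta$; $\nu_\beta$ the unique probability with $\mathcal L_\beta^*\nu_\beta=\lambda_\beta\nu_\beta$; $\mu_\beta:=\Phi_\beta\nu_\beta/\int\Phi_\beta d\nu_\beta$. $F_\beta^i(\lambda):=\sum_{k\ge1}\lambda^{-k}e^{-\beta H_k^i}$, $\tilde F_\beta^i(\lambda):=\sum_{k\ge1}k\lambda^{-k}e^{-\beta H_k^i}$. *)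

(* Defs.v *)
From Stdlib Require Import Reals Lra List ClassicalEpsilon.
Open Scope R_scope.

(* Sigma = {0,1}^N ; bit 0 is [false], bit 1 is [true]. *)
Definition Sigma := nat -> bool.

Definition agree (n : nat) (x y : Sigma) : Prop := forall i, (i < n)%nat -> x i = y i.

Definition contS (f : Sigma -> R) : Prop :=
  forall x eps, 0 < eps -> exists N, forall y, agree N x y -> Rabs (f y - f x) < eps.

Definition scons (b : bool) (x : Sigma) : Sigma :=
  fun n => match n with O => b | S m => x m end.

(* summable variation: sum_{n>=1} var_n(H) < oo, var_n(H) = sup{|H x - H y| : x,y agree on n coords} *)
Definition summable_variation (H : Sigma -> R) : Prop :=
  exists v : nat -> R,
    (forall n x y, agree (S n) x y -> Rabs (H x - H y) <= v n) /\
    exists l, infinite_sum v l.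

Definition in_block (b : bool) (n : nat) (x : Sigma) : Prop :=
  x O = b /\ (forall i, (1 <= i <= n)%nat -> x i = negb b) /\ x (S n) = b.

Definition reduced_double_well (H : Sigma -> R) (H0 H1 : nat -> R) : Prop :=
  contS H /\ (forall x, 0 <= H x) /\ summable_variation H /\
  (forall x, x O = x 1%nat -> H x = 0) /\
  (forall n x, (1 <= n)%nat -> in_block false n x -> H x = H0 n) /\
  (forall n x, (1 <= n)%nat -> in_block true n x -> H x = H1 n) /\
  (forall n, (1 <= n)%nat -> 0 < H0 n) /\
  (forall n, (1 <= n)%nat -> 0 < H1 n) /\
  (exists w : nat -> R, (forall k n, (1 <= k)%nat -> Rabs (H0 k - H0 (k + n)%nat) <= w k) /\
     exists l, infinite_sum (fun k => w (S k)) l) /\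
  (exists w : nat -> R, (forall k n, (1 <= k)%nat -> Rabs (H1 k - H1 (k + n)%nat) <= w k) /\
     exists l, infinite_sum (fun k => w (S k)) l).

Definition Lop (H : Sigma -> R) (beta : R) (f : Sigma -> R) : Sigma -> R :=
  fun x => exp (- beta * H (scons false x)) * f (scons false x)
         + exp (- beta * H (scons true x)) * f (scons true x).

Definition is_eigenfunction (H : Sigma -> R) (beta lam : R) (Phi : Sigma -> R) : Prop :=
  contS Phi /\ (forall x, 0 < Phi x) /\
  (forall x, Lop H beta Phi x = lam * Phi x) /\
  (forall x, Phi x <= 1) /\ (exists x, Phi x = 1).

(* Borel probability measures on Sigma, represented (Riesz) as positive normalized
   linear functionals on C(Sigma); only values on continuous functions matter. *)
Definition is_prob_functional (nu : (Sigma -> R) -> R) : Prop :=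
  (forall f g, contS f -> contS g -> nu (fun x => f x + g x) = nu f + nu g) /\
  (forall a f, contS f -> nu (fun x => a * f x) = a * nu f) /\
  (forall f, contS f -> (forall x, 0 <= f x) -> 0 <= nu f) /\
  nu (fun _ => 1) = 1.

Definition is_eigenmeasure (H : Sigma -> R) (beta lam : R) (nu : (Sigma -> R) -> R) : Prop :=
  is_prob_functional nu /\ forall f, contS f -> nu (Lop H beta f) = lam * nu f.

Definition ind (b : bool) (x : Sigma) : R := if Bool.eqb (x O) b then 1 else 0.

Definition mu_cyl (Phi : Sigma -> R) (nu : (Sigma -> R) -> R) (b : bool) : R :=
  nu (fun x => Phi x * ind b x) / nu Phi.

Definition series (u : nat -> R) : R := epsilon (inhabits 0) (fun l => infinite_sum u l).

Definition Fb (Hi : nat -> R) (beta lam : R) : R :=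
  series (fun k => / lam ^ (S k) * exp (- beta * Hi (S k))).
Definition Ftb (Hi : nat -> R) (beta lam : R) : R :=
  series (fun k => INR (S k) * / lam ^ (S k) * exp (- beta * Hi (S k))).

Definition asym (f g : R -> R) : Prop :=
  forall eps, 0 < eps -> exists B, forall beta, B <= beta -> Rabs (f beta / g beta - 1) < eps.

Definition lim_infty (f : R -> R) (l : R) : Prop :=
  forall eps, 0 < eps -> exists B, forall beta, B <= beta -> Rabs (f beta - l) < eps.

(* Main.v *)
Require Import Defs.
From Stdlib Require Import Reals List Lra Lia ClassicalEpsilon FunctionalExtensionality ConstructiveEpsilon Classical Bool.
From Coquelicot Require Import Coquelicot.
Import ListNotations.
Open Scope R_scope.

Definition stl (x : Sigma) : Sigma := fun n => x (S n).

Lemma agree_mono n m x y : (m <= n)%nat -> agree n x y -> agree m x y.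
Proof. intros Hm Ha i Hi. apply Ha; lia. Qed.

Lemma agree_sym n x y : agree n x y -> agree n y x.
Proof. intros Ha i Hi. symmetry; auto. Qed.

Lemma agree_scons n b x y : agree n x y -> agree (S n) (scons b x) (scons b y).
Proof. intros Ha [|i] Hi; simpl; auto. apply Ha; lia. Qed.

Lemma contS_const c : contS (fun _ => c).
Proof. intros x e He. exists O. intros. rewrite Rminus_diag, Rabs_R0; auto. Qed.

Lemma contS_plus f g : contS f -> contS g -> contS (fun x => f x + g x).
Proof.
  intros Hf Hg x e He.
  destruct (Hf x (e/2)) as [N1 H1]; [lra|].
  destruct (Hg x (e/2)) as [N2 H2]; [lra|].
  exists (max N1 N2). intros y Hy.
  specialize (H1 y (agree_mono _ _ _ _ (Nat.le_max_l _ _) Hy)).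
  specialize (H2 y (agree_mono _ _ _ _ (Nat.le_max_r _ _) Hy)).
  replace (f y + g y - (f x + g x)) with ((f y - f x) + (g y - g x)) by ring.
  eapply Rle_lt_trans; [apply Rabs_triang|]. lra.
Qed.

Lemma contS_comp f F : contS f -> (forall x, continuity_pt F (f x)) -> contS (fun x => F (f x)).
Proof.
  intros Hf HF x e He.
  destruct (HF x e He) as [d [Hd Hd2]].
  destruct (Hf x d Hd) as [N HN].
  exists N. intros y Hy.
  destruct (Req_dec (f y) (f x)) as [E|E].
  - rewrite E, Rminus_diag, Rabs_R0; auto.
  - apply (Hd2 (f y)). split. split; [exact I| auto]. apply HN; auto.
Qed.

Lemma contS_mult f g : contS f -> contS g -> contS (fun x => f x * g x).
Proof.
  intros Hf Hg x e He.
  set (M := Rabs (f x) + Rabs (g x) + 1).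
  assert (HM : 0 < M) by (unfold M; pose proof (Rabs_pos (f x)); pose proof (Rabs_pos (g x)); lra).
  set (d := Rmin 1 (e / (2 * M))).
  assert (Hd : 0 < d). { unfold d. apply Rmin_pos; [lra|]. apply Rdiv_lt_0_compat; lra. }
  destruct (Hf x d Hd) as [N1 H1].
  destruct (Hg x d Hd) as [N2 H2].
  exists (max N1 N2). intros y Hy.
  specialize (H1 y (agree_mono _ _ _ _ (Nat.le_max_l _ _) Hy)).
  specialize (H2 y (agree_mono _ _ _ _ (Nat.le_max_r _ _) Hy)).
  replace (f y * g y - f x * g x) with ((f y - f x) * (g y - g x) + (f y - f x) * g x + f x * (g y - g x)) by ring.
  assert (d1 : d <= 1) by apply Rmin_l.
  assert (d2 : d <= e / (2*M)) by apply Rmin_r.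
  assert (d3 : d * M <= e/2).
  { apply Rmult_le_compat_r with (r := M) in d2; [|lra].
    replace (e / (2*M) * M) with (e/2) in d2 by (field; lra). lra. }
  repeat rewrite Rabs_mult.
  eapply Rle_lt_trans. { eapply Rle_trans; [apply Rabs_triang|]. apply Rplus_le_compat_r. apply Rabs_triang. }
  rewrite !Rabs_mult.
  assert (A1 : Rabs (f y - f x) * Rabs (g y - g x) <= d * d).
  { apply Rmult_le_compat; try apply Rabs_pos; lra. }
  assert (A2 : Rabs (f y - f x) * Rabs (g x) <= d * Rabs (g x)).
  { apply Rmult_le_compat_r; [apply Rabs_pos| lra]. }
  assert (A3 : Rabs (f x) * Rabs (g y - g x) <= Rabs (f x) * d).
  { apply Rmult_le_compat_l; [apply Rabs_pos| lra]. }
  assert (A4 : Rabs (f y - f x) * Rabs (g x) < d * (Rabs (g x) + 1) \/ True) by auto.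
  assert (d * d <= d * 1) by (apply Rmult_le_compat_l; lra).
  assert (d * d + d * Rabs (g x) + Rabs (f x) * d <= d * M) by (unfold M; nra).
  assert (Rabs (f y - f x) * Rabs (g y - g x) < d * d \/ Rabs (f y - f x) * Rabs (g y - g x) <= d * d) by lra.
  assert (Rabs (f y - f x) * Rabs (g y - g x) <= d * Rabs (g y - g x)).
  { apply Rmult_le_compat_r; [apply Rabs_pos|lra]. }
  assert (d * Rabs (g y - g x) < d * d) by (apply Rmult_lt_compat_l; lra).
  lra.
Qed.

Lemma contS_scons f b : contS f -> contS (fun x => f (scons b x)).
Proof.
  intros Hf x e He. destruct (Hf (scons b x) e He) as [N HN].
  exists N. intros y Hy. apply HN. apply (agree_mono (S N)); [lia|]. apply agree_scons; auto.
Qed.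

Lemma contS_exp f a : contS f -> contS (fun x => exp (a * f x)).
Proof.
  intros Hf. apply (contS_comp (fun x => a * f x) exp).
  - intros x e He.
    destruct (Req_dec a 0) as [Ea|Ea].
    + exists O. intros. rewrite Ea. replace (0 * f y - 0 * f x) with 0 by ring. rewrite Rabs_R0; auto.
    + assert (Hpa : 0 < Rabs a) by (apply Rabs_pos_lt; auto).
      destruct (Hf x (e / Rabs a)) as [N HN]; [apply Rdiv_lt_0_compat; auto|].
      exists N; intros y Hy. specialize (HN y Hy).
      replace (a * f y - a * f x) with (a * (f y - f x)) by ring. rewrite Rabs_mult.
      apply Rmult_lt_compat_l with (r := Rabs a) in HN; auto.
      replace (Rabs a * (e / Rabs a)) with e in HN by (field; lra). auto.
  - intros x. apply derivable_continuous_pt, derivable_pt_exp.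
Qed.

Lemma contS_inv f : contS f -> (forall x, f x <> 0) -> contS (fun x => / f x).
Proof.
  intros Hf Hn. apply (contS_comp f Rinv); auto.
  intros x. apply (continuity_pt_inv (fun r => r)); [apply derivable_continuous_pt, derivable_pt_id| apply Hn].
Qed.

Definition upd (s : Sigma) (n : nat) (b : bool) : Sigma :=
  fun i => if Nat.eqb i n then b else s i.


Fixpoint kseq (P : nat -> Sigma -> Prop) (n : nat) : Sigma :=
  match n with
  | O => fun _ => false
  | S m => let s := kseq P m in
           if excluded_middle_informative (P (S m) (upd s m false)) then upd s m false
           else upd s m true
  end.

Lemma koenig (P : nat -> Sigma -> Prop) :
  P O (fun _ => false) ->
  (forall n s, P n s -> P (S n) (upd s n false) \/ P (S n) (upd s n true)) ->
  exists x, forall n, exists s, agree n x s /\ P n s.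
Proof.
  intros H0 Hs.
  assert (Inv : forall n, P n (kseq P n)).
  { induction n; simpl; auto.
    destruct (excluded_middle_informative _) as [E|E]; auto.
    destruct (Hs _ _ IHn); tauto. }
  assert (Stab : forall n i, (i < n)%nat -> kseq P (S n) i = kseq P n i).
  { intros n i Hi. simpl. destruct (excluded_middle_informative _); unfold upd;
    destruct (Nat.eqb_spec i n); auto; lia. }
  assert (Stab2 : forall k n i, (i < n)%nat -> kseq P (k + n) i = kseq P n i).
  { induction k; intros n i Hi; simpl; auto.
    change (kseq P (S (k + n)) i = kseq P n i). rewrite Stab by lia. auto. }
  exists (fun i => kseq P (S i) i).
  intros n. exists (kseq P n). split; auto.
  intros i Hi. replace n with ((n - S i) + S i)%nat by lia. rewrite Stab2 by lia. auto.
Qed.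

Lemma agree_upd n s b y : agree (S n) (upd s n b) y -> agree n s y.
Proof. intros Ha i Hi. rewrite <- Ha by lia. unfold upd. destruct (Nat.eqb_spec i n); auto; lia. Qed.

Lemma agree_split n s y : agree n s y -> agree (S n) (upd s n false) y \/ agree (S n) (upd s n true) y.
Proof.
  intros Ha. destruct (y n) eqn:E; [right|left]; intros i Hi; unfold upd;
  destruct (Nat.eqb_spec i n); subst; auto; apply Ha; lia.
Qed.

Lemma contS_bounded_below g : contS g -> exists m, forall y, m <= g y.
Proof.
  intros Hg. apply NNPP. intros Hn.
  set (P := fun n s => forall M, exists y, agree n s y /\ g y < M).
  assert (P0 : P O (fun _ => false)).
  { intros M. apply NNPP; intros HM. apply Hn. exists M. intros y.
    apply Rnot_lt_le. intros Hl. apply HM. exists y. split; auto. intros i Hi; lia. }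
  assert (Ps : forall n s, P n s -> P (S n) (upd s n false) \/ P (S n) (upd s n true)).
  { intros n s Hp. apply NNPP. intros Hno. apply not_or_and in Hno. destruct Hno as [A B].
    apply not_all_ex_not in A. destruct A as [M1 A].
    apply not_all_ex_not in B. destruct B as [M2 B].
    destruct (Hp (Rmin M1 M2)) as [y [Hy1 Hy2]].
    destruct (agree_split _ _ _ Hy1) as [C|C].
    - apply A. exists y. split; auto. pose proof (Rmin_l M1 M2); lra.
    - apply B. exists y. split; auto. pose proof (Rmin_r M1 M2); lra. }
  destruct (koenig P P0 Ps) as [x Hx].
  destruct (Hg x 1) as [N HN]; [lra|].
  destruct (Hx N) as [s [Hs Ps']].
  destruct (Ps' (g x - 1)) as [y [Hy1 Hy2]].
  assert (agree N x y) by (intros i Hi; rewrite Hs by auto; auto).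
  specialize (HN y H). apply Rabs_def2 in HN. lra.
Qed.

Lemma contS_min g : contS g -> exists x, forall y, g x <= g y.
Proof.
  intros Hg.
  destruct (contS_bounded_below g Hg) as [m0 Hm0].
  set (E := fun r => exists y, r = - g y).
  assert (Eb : bound E). { exists (- m0). intros r [y ->]. specialize (Hm0 y). lra. }
  assert (Ene : exists r, E r) by (exists (- g (fun _ => false)); exists (fun _ => false); auto).
  destruct (completeness E Eb Ene) as [s [Hs1 Hs2]].
  set (m := - s).
  assert (Lb : forall y, m <= g y). { intros y. unfold m. assert (- g y <= s) by (apply Hs1; exists y; auto). lra. }
  assert (Appr : forall e, 0 < e -> exists y, g y < m + e).
  { intros e He. apply NNPP. intros Hn. assert (s <= s - e); [|lra].
    apply Hs2. intros r [y ->]. apply Rnot_lt_le. intros Hl. apply Hn. exists y. unfold m. lra. }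
  set (P := fun n s => forall e, 0 < e -> exists y, agree n s y /\ g y < m + e).
  assert (P0 : P O (fun _ => false)).
  { intros e He. destruct (Appr e He) as [y Hy]. exists y. split; auto. intros i Hi; lia. }
  assert (Ps : forall n s, P n s -> P (S n) (upd s n false) \/ P (S n) (upd s n true)).
  { intros n s0 Hp. apply NNPP. intros Hno. apply not_or_and in Hno. destruct Hno as [A B].
    apply not_all_ex_not in A. destruct A as [e1 A]. apply imply_to_and in A. destruct A as [He1 A].
    apply not_all_ex_not in B. destruct B as [e2 B]. apply imply_to_and in B. destruct B as [He2 B].
    destruct (Hp (Rmin e1 e2)) as [y [Hy1 Hy2]]; [apply Rmin_pos; auto|].
    destruct (agree_split _ _ _ Hy1) as [C|C].
    - apply A. exists y. split; auto. pose proof (Rmin_l e1 e2); lra.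
    - apply B. exists y. split; auto. pose proof (Rmin_r e1 e2); lra. }
  destruct (koenig P P0 Ps) as [x Hx].
  exists x. intros y. eapply Rle_trans; [|apply Lb].
  apply Rnot_lt_le. intros Hl.
  set (e := (g x - m) / 2).
  assert (He : 0 < e) by (unfold e; lra).
  destruct (Hg x e He) as [N HN].
  destruct (Hx N) as [s0 [Hs Ps']].
  destruct (Ps' e He) as [z [Hz1 Hz2]].
  assert (agree N x z) by (intros i Hi; rewrite Hs by auto; auto).
  specialize (HN z H). apply Rabs_def2 in HN. unfold e in *. lra.
Qed.

Lemma contS_max g : contS g -> exists x, forall y, g y <= g x.
Proof.
  intros Hg. destruct (contS_min (fun x => -1 * g x)) as [x Hx].
  - apply contS_mult; auto. apply contS_const.
  - exists x. intros y. specialize (Hx y). lra.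
Qed.

Fixpoint mp (w : list bool) (x : Sigma) : bool :=
  match w with
  | nil => true
  | b :: w' => Bool.eqb (x O) b && mp w' (stl x)
  end.

Definition cyl (w : list bool) (x : Sigma) : R := if mp w x then 1 else 0.

Lemma mp_nth w : forall x, mp w x = true <-> forall i, (i < length w)%nat -> x i = nth i w false.
Proof.
  induction w as [|b w IH]; intros x; simpl.
  - split; auto. intros _ i Hi; lia.
  - rewrite andb_true_iff, IH. split.
    + intros [E H] [|i] Hi; simpl.
      * apply eqb_prop in E; auto.
      * apply (H i); lia.
    + intros H. split.
      * apply eqb_true_iff. apply (H O); lia.
      * intros i Hi. apply (H (S i)); lia.
Qed.

Lemma mp_agree w x y : agree (length w) x y -> mp w x = mp w y.
Proof.
  revert x y; induction w as [|b w IH]; intros x y Ha; simpl; auto.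
  rewrite (Ha O) by (simpl; lia). f_equal. apply IH. intros i Hi. apply (Ha (S i)). simpl; lia.
Qed.

Lemma contS_cyl w : contS (cyl w).
Proof.
  intros x e He. exists (length w). intros y Hy. unfold cyl. rewrite (mp_agree w x y Hy).
  rewrite Rminus_diag, Rabs_R0; auto.
Qed.

Lemma cyl_scons b c w x : cyl (b :: w) (scons c x) = if Bool.eqb c b then cyl w x else 0.
Proof. unfold cyl. simpl. destruct (Bool.eqb c b); simpl; auto. Qed.

Lemma cyl_nil x : cyl nil x = 1.
Proof. reflexivity. Qed.

Lemma cyl_split w : forall x, cyl w x = cyl (w ++ [false]) x + cyl (w ++ [true]) x.
Proof.
  induction w as [|b w IH]; intros x.
  - unfold cyl; simpl. destruct (x O); simpl; ring.
  - unfold cyl in *; simpl. destruct (Bool.eqb (x O) b); simpl; [apply IH| ring].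
Qed.

Lemma cyl_split' w b x : cyl w x = cyl (w ++ [b]) x + cyl (w ++ [negb b]) x.
Proof. rewrite cyl_split. destruct b; simpl; ring. Qed.

Lemma cyl_01 w x : cyl w x = 0 \/ cyl w x = 1.
Proof. unfold cyl; destruct (mp w x); auto. Qed.

Lemma ind_cyl (b : bool) : Defs.ind b = cyl [b].
Proof. apply functional_extensionality; intros x. unfold Defs.ind, cyl. simpl. rewrite andb_true_r. auto. Qed.

Lemma Lop_cyl H beta g b w :
  Lop H beta (fun y => g y * cyl (b :: w) y) =
  (fun x => exp (- beta * H (scons b x)) * g (scons b x) * cyl w x).
Proof.
  apply functional_extensionality; intros x. unfold Lop. rewrite !cyl_scons.
  destruct b; simpl; ring.
Qed.

Definition fc (x : Sigma) : option nat :=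
  match excluded_middle_informative (exists n, x (S n) <> x O) with
  | left E => Some (proj1_sig (epsilon_smallest (fun n => x (S n) <> x O)
                     (fun n => match bool_dec (x (S n)) (x O) with left e => right (fun h => h e) | right e => left e end) E))
  | right _ => None
  end.

Lemma fc_some x n : fc x = Some n -> x (S n) <> x O /\ forall i, (i <= n)%nat -> x i = x O.
Proof.
  unfold fc. destruct (excluded_middle_informative _) as [E|E]; [|discriminate].
  destruct (epsilon_smallest _ _ E) as [m [Hm1 Hm2]]. simpl. intros Hs; inversion Hs; subst.
  split; auto. intros [|i] Hi; auto. destruct (bool_dec (x (S i)) (x O)) as [e|e]; auto.
  specialize (Hm2 i e). lia.
Qed.

Lemma fc_none x : fc x = None -> forall i, x i = x O.
Proof.
  unfold fc. destruct (excluded_middle_informative _) as [E|E]; [discriminate|].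
  intros _ [|i]; auto. destruct (bool_dec (x (S i)) (x O)) as [e|e]; auto.
  exfalso; apply E; exists i; auto.
Qed.

Lemma fc_char x n : x (S n) <> x O -> (forall i, (i <= n)%nat -> x i = x O) -> fc x = Some n.
Proof.
  intros H1 H2. destruct (fc x) as [m|] eqn:E.
  - apply fc_some in E. destruct E as [E1 E2]. f_equal.
    destruct (Nat.lt_total m n) as [L|[L|L]]; auto.
    + exfalso. apply E1. apply H2. lia.
    + exfalso. apply H1. apply E2. lia.
  - exfalso. apply H1. apply (fc_none x E).
Qed.

Lemma fc_char_none x : (forall i, x i = x O) -> fc x = None.
Proof.
  intros H. destruct (fc x) as [m|] eqn:E; auto. apply fc_some in E. destruct E as [E _].
  exfalso; apply E, H.
Qed.

Lemma fc_scons_same b x : x O = b -> fc (scons b x) = match fc x with Some n => Some (S n) | None => None end.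
Proof.
  intros Hb. destruct (fc x) as [n|] eqn:E.
  - apply fc_some in E. destruct E as [E1 E2]. apply fc_char; simpl.
    + congruence.
    + intros [|i] Hi; simpl; auto. rewrite E2 by lia. auto.
  - apply fc_char_none. intros [|i]; simpl; auto. rewrite (fc_none x E i). auto.
Qed.

Lemma fc_scons_diff b x : x O <> b -> fc (scons b x) = Some O.
Proof. intros Hb. apply fc_char; simpl; auto. intros [|i] Hi; auto; lia. Qed.

Lemma mp_block b n x : mp (repeat (negb b) (S n) ++ [b]) x = true ->
  x O = negb b /\ fc x = Some n.
Proof.
  intros Hm. rewrite mp_nth in Hm. rewrite length_app, repeat_length in Hm. cbn [length] in Hm.
  assert (Hi : forall i, (i <= n)%nat -> x i = negb b).
  { intros i Hi. rewrite Hm by lia. rewrite app_nth1 by (rewrite repeat_length; lia).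
    apply nth_repeat_lt. lia. }
  assert (Hn : x (S n) = b).
  { rewrite Hm by lia. rewrite app_nth2 by (rewrite repeat_length; lia).
    rewrite repeat_length. replace (S n - S n)%nat with O by lia. auto. }
  split; [apply Hi; lia|]. apply fc_char.
  - rewrite Hn, (Hi O) by lia. destruct b; simpl; congruence.
  - intros i Hii. rewrite !Hi by lia. auto.
Qed.

Lemma mp_rep b n x : mp (repeat b (S n)) x = true -> x O = b /\ forall i, (i <= n)%nat -> x i = b.
Proof.
  intros Hm. rewrite mp_nth, repeat_length in Hm.
  assert (forall i, (i <= n)%nat -> x i = b) by (intros i Hi; rewrite Hm by lia; apply nth_repeat_lt; lia).
  split; auto. apply H; lia.
Qed.

Definition Hlev (H0 H1 : nat -> R) (c : bool) : nat -> R := if c then H1 else H0.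
Definition Hinfb (Hinf0 Hinf1 : R) (c : bool) : R := if c then Hinf1 else Hinf0.

Lemma H_same H H0 H1 b x : reduced_double_well H H0 H1 -> x O = b -> H (scons b x) = 0.
Proof. intros R Hx. destruct R as [_ [_ [_ [R _]]]]. apply R. simpl. auto. Qed.

Lemma H_block H H0 H1 b x n : reduced_double_well H H0 H1 -> x O = negb b -> fc x = Some n ->
  H (scons b x) = Hlev H0 H1 b (S n).
Proof.
  intros R Hx Hf. apply fc_some in Hf. destruct Hf as [F1 F2].
  destruct R as [_ [_ [_ [_ [R0 [R1 _]]]]]].
  assert (IB : in_block b (S n) (scons b x)).
  { split; [auto|split].
    - intros [|i] Hi; [lia|]. simpl. rewrite F2 by lia. auto.
    - simpl. rewrite Hx in F1. destruct (x (S n)), b; simpl in *; congruence. }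
  destruct b; simpl; [apply R1| apply R0]; auto; lia.
Qed.

Lemma H_inf H H0 H1 Hinf0 Hinf1 b x : reduced_double_well H H0 H1 ->
  Un_cv H0 Hinf0 -> Un_cv H1 Hinf1 ->
  x O = negb b -> fc x = None -> H (scons b x) = Hinfb Hinf0 Hinf1 b.
Proof.
  intros R C0 C1 Hx Hf. pose proof (fc_none x Hf) as Hc.
  assert (Cv : Un_cv (Hlev H0 H1 b) (Hinfb Hinf0 Hinf1 b)) by (destruct b; auto).
  pose proof R as [Hcont _].
  apply NNPP; intros Hne.
  set (e := Rabs (H (scons b x) - Hinfb Hinf0 Hinf1 b) / 2).
  assert (He : 0 < e) by (unfold e; apply Rdiv_lt_0_compat; [apply Rabs_pos_lt; intro; apply Hne; lra| lra]).
  destruct (Hcont (scons b x) e He) as [N HN].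
  destruct (Cv e He) as [N2 HN2].
  set (M := S (max N N2)).
  set (y := fun i => if Nat.ltb i M then negb b else b).
  assert (Hy0 : y O = negb b) by (unfold y; simpl; auto).
  assert (Hfy : fc y = Some (max N N2)).
  { apply fc_char.
    - unfold y. rewrite Nat.ltb_irrefl. rewrite (proj2 (Nat.ltb_lt _ _)) by (unfold M; lia).
      destruct b; simpl; congruence.
    - intros i Hi; unfold y. rewrite !(proj2 (Nat.ltb_lt _ _)) by (unfold M; lia); auto. }
  pose proof (H_block H H0 H1 b y _ R Hy0 Hfy) as Hb.
  assert (Ag : agree N (scons b x) (scons b y)).
  { apply (agree_mono (S N)); [lia|]. apply agree_scons. intros i Hi. rewrite Hc, Hx.
    unfold y. rewrite (proj2 (Nat.ltb_lt _ _)) by (unfold M; lia). auto. }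
  specialize (HN _ Ag). rewrite Hb in HN.
  specialize (HN2 (S (max N N2)) ltac:(lia)). unfold R_dist in HN2.
  assert (Rabs (H (scons b x) - Hinfb Hinf0 Hinf1 b) <= Rabs (Hlev H0 H1 b (S (Nat.max N N2)) - H (scons b x)) + Rabs (Hlev H0 H1 b (S (Nat.max N N2)) - Hinfb Hinf0 Hinf1 b)).
  { replace (H (scons b x) - Hinfb Hinf0 Hinf1 b) with (- (Hlev H0 H1 b (S (Nat.max N N2)) - H (scons b x)) + (Hlev H0 H1 b (S (Nat.max N N2)) - Hinfb Hinf0 Hinf1 b)) by ring.
    eapply Rle_trans; [apply Rabs_triang|]. rewrite Rabs_Ropp. lra. }
  unfold e in *. lra.
Qed.

Lemma exp_le_mono x y : x <= y -> exp x <= exp y.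
Proof. intros [H|H]; [left; apply exp_increasing; auto| subst; lra]. Qed.

Lemma inv_lt1 l : 1 < l -> / l < 1.
Proof. intros H. rewrite <- Rinv_1. apply Rinv_lt_contravar; lra. Qed.

Lemma series_eq u l : infinite_sum u l -> series u = l.
Proof.
  intros Hu. unfold series. apply (uniqueness_sum u); auto.
  apply epsilon_spec. exists l; auto.
Qed.

Lemma infsum_scal u l c : infinite_sum u l -> infinite_sum (fun n => c * u n) (c * l).
Proof.
  intros Hu. apply is_series_Reals. apply is_series_Reals in Hu.
  apply (is_series_scal c) in Hu. exact Hu.
Qed.

Lemma infsum_ge u l N : infinite_sum u l -> (forall n, 0 <= u n) -> sum_f_R0 u N <= l.
Proof. intros Hu Hp. apply sum_incr; auto. Qed.

Lemma infsum_from_partial u l (r : nat -> R) :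
  (forall n, l = sum_f_R0 u n + r n) -> (forall e, 0 < e -> exists N, forall n, (n >= N)%nat -> Rabs (r n) < e) ->
  infinite_sum u l.
Proof.
  intros Hs Hr e He. destruct (Hr e He) as [N HN]. exists N. intros n Hn. unfold R_dist.
  rewrite (Hs n). replace (sum_f_R0 u n - (sum_f_R0 u n + r n)) with (- r n) by ring.
  rewrite Rabs_Ropp. apply HN; lia.
Qed.

Lemma pow_inv_small lam : 1 < lam -> forall e, 0 < e -> exists N, forall n, (n >= N)%nat -> / lam ^ n < e.
Proof.
  intros Hl e He. destruct (pow_lt_1_zero (/ lam)) with (y := e) as [N HN]; auto.
  { rewrite Rabs_right. apply inv_lt1; lra. left; apply Rinv_0_lt_compat; lra. }
  exists N. intros n Hn. specialize (HN n Hn). rewrite <- pow_inv. rewrite Rabs_right in HN; auto.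
  left. apply pow_lt. apply Rinv_0_lt_compat; lra.
Qed.

Lemma nu_add (nu : (Sigma -> R) -> R) (f g : Sigma -> R) : is_prob_functional nu -> contS f -> contS g -> nu (fun x => f x + g x) = nu f + nu g.
Proof. intros [A _] Hf Hg. apply A; auto. Qed.

Lemma nu_scal (nu : (Sigma -> R) -> R) a (f : Sigma -> R) : is_prob_functional nu -> contS f -> nu (fun x => a * f x) = a * nu f.
Proof. intros [_ [A _]] Hf. apply A; auto. Qed.

Lemma nu_pos (nu : (Sigma -> R) -> R) (f : Sigma -> R) : is_prob_functional nu -> contS f -> (forall x, 0 <= f x) -> 0 <= nu f.
Proof. intros [_ [_ [A _]]] Hf. apply A; auto. Qed.

Lemma nu_one (nu : (Sigma -> R) -> R) : is_prob_functional nu -> nu (fun _ => 1) = 1.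
Proof. intros [_ [_ [_ A]]]. auto. Qed.

Lemma nu_ext (nu : (Sigma -> R) -> R) (f g : Sigma -> R) : (forall x, f x = g x) -> nu f = nu g.
Proof. intros E. f_equal. apply functional_extensionality; auto. Qed.

Lemma nu_const (nu : (Sigma -> R) -> R) c : is_prob_functional nu -> nu (fun _ => c) = c.
Proof.
  intros P. rewrite (nu_ext nu (fun _ => c) (fun _ => c * 1)) by (intros; ring).
  rewrite nu_scal, nu_one; auto. ring. apply contS_const.
Qed.

Lemma nu_mono (nu : (Sigma -> R) -> R) (f g : Sigma -> R) : is_prob_functional nu -> contS f -> contS g -> (forall x, f x <= g x) -> nu f <= nu g.
Proof.
  intros P Hf Hg Hle.
  assert (Cd : contS (fun x => g x + -1 * f x)) by (apply contS_plus; auto; apply contS_mult; auto; apply contS_const).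
  assert (E : nu g = nu f + nu (fun x => g x + -1 * f x)).
  { rewrite <- nu_add; auto. apply nu_ext; intros; ring. }
  assert (0 <= nu (fun x => g x + -1 * f x)) by (apply nu_pos; auto; intros x; specialize (Hle x); lra).
  lra.
Qed.

Definition Ncyl (nu : (Sigma -> R) -> R) w := nu (cyl w).

Lemma N_nonneg (nu : (Sigma -> R) -> R) w : is_prob_functional nu -> 0 <= Ncyl nu w.
Proof. intros P. apply nu_pos; auto. apply contS_cyl. intros x; destruct (cyl_01 w x) as [E|E]; lra. Qed.

Lemma N_split (nu : (Sigma -> R) -> R) w b : is_prob_functional nu -> Ncyl nu w = Ncyl nu (w ++ [b]) + Ncyl nu (w ++ [negb b]).
Proof.
  intros P. unfold Ncyl. rewrite <- nu_add; try apply contS_cyl; auto.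
  apply nu_ext. intros x. apply cyl_split'.
Qed.

Lemma N_nil (nu : (Sigma -> R) -> R) : is_prob_functional nu -> Ncyl nu [] = 1.
Proof. intros P. unfold Ncyl. rewrite <- (nu_one nu P). apply nu_ext. intros; apply cyl_nil. Qed.

Lemma cyl_head b w x : cyl (b :: w) x <> 0 -> x O = b.
Proof. unfold cyl. simpl. destruct (Bool.eqb (x O) b) eqn:E; simpl. intros _. apply eqb_prop; auto. intros H; lra. Qed.

Lemma cont_expH H beta b : contS H -> contS (fun x => exp (- beta * H (scons b x))).
Proof. intros Hc. apply (contS_exp (fun x => H (scons b x))). apply contS_scons; auto. Qed.

Lemma contS_Lop H beta f : contS H -> contS f -> contS (Lop H beta f).
Proof.
  intros Hc Hf. unfold Lop. apply contS_plus; apply contS_mult; try apply cont_expH; auto; apply contS_scons; auto.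
Qed.

Lemma nu_eig H beta lam nu g b w : is_eigenmeasure H beta lam nu -> contS H -> contS g ->
  nu (fun x => exp (- beta * H (scons b x)) * g (scons b x) * cyl w x) = lam * nu (fun y => g y * cyl (b :: w) y).
Proof.
  intros [P E] Hc Hg. rewrite <- E. rewrite Lop_cyl. auto.
  apply contS_mult; auto. apply contS_cyl.
Qed.

Lemma H_bounded H H0 H1 : reduced_double_well H H0 H1 -> exists M, 0 <= M /\ forall x, 0 <= H x <= M.
Proof.
  intros R. pose proof R as [Hc [Hp _]]. destruct (contS_max H Hc) as [x Hx].
  exists (H x). split; auto.
Qed.

Lemma lam_gt1 H H0 H1 beta lam nu : reduced_double_well H H0 H1 -> 0 < beta ->
  is_eigenmeasure H beta lam nu -> 1 < lam.
Proof.
  intros R Hb Hnu. pose proof R as [Hc _].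
  destruct (H_bounded _ _ _ R) as [M [HM HM2]].
  pose proof Hnu as [P E].
  assert (L : lam = nu (Lop H beta (fun _ => 1))).
  { rewrite E by apply contS_const. rewrite nu_one; auto. ring. }
  assert (G : nu (fun _ => 1 + exp (- beta * M)) <= nu (Lop H beta (fun _ => 1))).
  { apply nu_mono; auto. apply contS_const. apply contS_Lop; auto; apply contS_const.
    intros x. unfold Lop.
    assert (Hge : forall y, exp (- beta * M) <= exp (- beta * H y)).
    { intros y. destruct (HM2 y). apply exp_le_mono. nra. }
    assert (Hgp : forall y, 0 <= exp (- beta * H y)) by (intros; left; apply exp_pos).
    destruct (x O) eqn:Ex.
    - rewrite (H_same _ _ _ true x R Ex). rewrite Rmult_0_r, exp_0.
      specialize (Hge (scons false x)). lra.
    - rewrite (H_same _ _ _ false x R Ex). rewrite Rmult_0_r, exp_0.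
      specialize (Hge (scons true x)). lra. }
  rewrite nu_const in G; auto. pose proof (exp_pos (- beta * M)). lra.
Qed.

Lemma repeat_snoc {A} (c : A) n : repeat c n ++ [c] = repeat c (S n).
Proof. induction n; simpl; auto. rewrite IHn; auto. Qed.

Lemma N_same H H0 H1 beta lam nu b w : reduced_double_well H H0 H1 -> is_eigenmeasure H beta lam nu ->
  Ncyl nu (b :: b :: w) * lam = Ncyl nu (b :: w).
Proof.
  intros R Hnu. pose proof R as [Hc _]. unfold Ncyl.
  pose proof (nu_eig H beta lam nu (fun _ => 1) b (b :: w) Hnu Hc (contS_const 1)) as E. cbv beta in E.
  rewrite (nu_ext nu (fun y => 1 * cyl (b :: b :: w) y) (cyl (b :: b :: w))) in E by (intros; ring).
  rewrite Rmult_comm, <- E. apply nu_ext. intros x.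
  destruct (Req_dec (cyl (b :: w) x) 0) as [Z|Z]. rewrite Z; ring.
  rewrite (H_same _ _ _ b x R (cyl_head _ _ _ Z)). rewrite Rmult_0_r, exp_0. ring.
Qed.

Lemma N_block H H0 H1 beta lam nu b n : reduced_double_well H H0 H1 -> is_eigenmeasure H beta lam nu ->
  Ncyl nu (b :: (repeat (negb b) (S n) ++ [b])) * lam =
  exp (- beta * Hlev H0 H1 b (S n)) * Ncyl nu (repeat (negb b) (S n) ++ [b]).
Proof.
  intros R Hnu. pose proof R as [Hc _]. unfold Ncyl.
  pose proof (nu_eig H beta lam nu (fun _ => 1) b (repeat (negb b) (S n) ++ [b]) Hnu Hc (contS_const 1)) as E. cbv beta in E.
  rewrite (nu_ext nu (fun y => 1 * cyl _ y) (cyl (b :: (repeat (negb b) (S n) ++ [b])))) in E by (intros; ring).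
  rewrite Rmult_comm, <- E. rewrite <- nu_scal by (pose proof Hnu as [P _]; auto; apply contS_cyl).
  apply nu_ext. intros x.
  destruct (cyl_01 (repeat (negb b) (S n) ++ [b]) x) as [Z|Z]. rewrite Z; ring.
  assert (M : mp (repeat (negb b) (S n) ++ [b]) x = true).
  { unfold cyl in Z. destruct (mp _ x); auto. lra. }
  destruct (mp_block _ _ _ M) as [X F].
  rewrite (H_block _ _ _ b x n R X F). ring.
Qed.

Lemma N_le H H0 H1 beta lam nu b w : reduced_double_well H H0 H1 -> 0 < beta -> is_eigenmeasure H beta lam nu ->
  Ncyl nu (b :: w) * lam <= Ncyl nu w.
Proof.
  intros R Hb Hnu. pose proof R as [Hc [Hp _]]. pose proof Hnu as [P _]. unfold Ncyl.
  pose proof (nu_eig H beta lam nu (fun _ => 1) b w Hnu Hc (contS_const 1)) as E. cbv beta in E.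
  rewrite (nu_ext nu (fun y => 1 * cyl _ y) (cyl (b :: w))) in E by (intros; ring).
  rewrite Rmult_comm, <- E. apply nu_mono; auto.
  - apply contS_mult; [apply contS_mult; [apply cont_expH; auto| apply contS_const]| apply contS_cyl].
  - apply contS_cyl.
  - intros x. assert (exp (- beta * H (scons b x)) <= 1).
    { rewrite <- exp_0. apply exp_le_mono. specialize (Hp (scons b x)). nra. }
    destruct (cyl_01 w x) as [Z|Z]; rewrite Z; pose proof (exp_pos (- beta * H (scons b x))); nra.
Qed.

Lemma N_rep H H0 H1 beta lam nu c w n : reduced_double_well H H0 H1 -> is_eigenmeasure H beta lam nu ->
  Ncyl nu (repeat c (S n) ++ w) * lam ^ n = Ncyl nu (c :: w).
Proof.
  intros R Hnu. induction n.
  - simpl. ring.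
  - change (repeat c (S (S n)) ++ w) with (c :: c :: (repeat c n ++ w)).
    rewrite <- IHn. change (repeat c (S n) ++ w) with (c :: (repeat c n ++ w)).
    rewrite <- (N_same _ _ _ beta lam nu c (repeat c n ++ w) R Hnu). simpl. ring.
Qed.

Lemma N_sum H H0 H1 beta lam nu b : reduced_double_well H H0 H1 -> 0 < beta -> is_eigenmeasure H beta lam nu ->
  infinite_sum (fun k => (/ lam ^ S k * exp (- beta * Hlev H0 H1 b (S k))) * Ncyl nu [negb b; b])
               (Ncyl nu [b; negb b]).
Proof.
  intros R Hb Hnu. pose proof Hnu as [P _].
  pose proof (lam_gt1 _ _ _ _ _ _ R Hb Hnu) as Hl.
  set (t := fun k => Ncyl nu (b :: (repeat (negb b) (S k) ++ [b]))).
  set (r := fun M => Ncyl nu (b :: repeat (negb b) (S (S M)))).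
  assert (Part : forall M, Ncyl nu [b; negb b] = sum_f_R0 t M + r M).
  { induction M.
    - simpl. unfold t, r. rewrite (N_split nu [b; negb b] b P). simpl. auto.
    - rewrite tech5, IHM. unfold r at 1. rewrite (N_split nu _ b P).
      unfold t, r. simpl. rewrite repeat_snoc. simpl. ring. }
  assert (Ht : forall k, t k = (/ lam ^ S k * exp (- beta * Hlev H0 H1 b (S k))) * Ncyl nu [negb b; b]).
  { intros k. unfold t. pose proof (N_block _ _ _ beta lam nu b k R Hnu) as E1.
    pose proof (N_rep _ _ _ beta lam nu (negb b) [b] k R Hnu) as E2.
    rewrite <- E2. apply Rmult_eq_reg_r with (r := lam); [|lra]. rewrite E1. simpl.
    assert (lam ^ k <> 0) by (apply pow_nonzero; lra). field. repeat split; auto; lra. }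
  apply (infsum_from_partial _ _ r).
  - intros M. rewrite (Part M). f_equal. apply sum_eq. intros i _. apply Ht.
  - intros e He. destruct (pow_inv_small lam Hl e He) as [N HN]. exists N. intros n Hn.
    assert (0 <= r n) by apply N_nonneg, P.
    assert (r n * lam <= Ncyl nu (repeat (negb b) (S (S n)))) by (apply (N_le H H0 H1 beta lam nu b); auto).
    pose proof (N_rep _ _ _ beta lam nu (negb b) [] (S n) R Hnu) as E.
    rewrite app_nil_r in E.
    assert (Ncyl nu [negb b] <= 1).
    { rewrite <- (N_nil nu P). rewrite (N_split nu [] (negb b) P). simpl. pose proof (N_nonneg nu [negb (negb b)] P). lra. }
    assert (Ncyl nu (repeat (negb b) (S (S n))) <= / lam ^ S n).
    { assert (0 < lam ^ S n) by (apply pow_lt; lra).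
      apply Rmult_le_reg_r with (r := lam ^ S n); auto. rewrite E, Rinv_l by lra. auto. }
    specialize (HN n Hn). rewrite Rabs_right by lra.
    assert (/ lam ^ S n <= / lam ^ n).
    { apply Rinv_le_contravar. apply pow_lt; lra. simpl. pose proof (pow_lt lam n ltac:(lra)). nra. }
    nra.
Qed.

Definition Fs (H0 H1 : nat -> R) beta lam b := Fb (Hlev H0 H1 b) beta lam.

Lemma N_b_nb H H0 H1 beta lam nu b : reduced_double_well H H0 H1 -> is_eigenmeasure H beta lam nu ->
  Ncyl nu [b; negb b] * lam = Ncyl nu [b] * (lam - 1).
Proof.
  intros R Hnu. pose proof Hnu as [P _].
  pose proof (N_split nu [b] b P) as E. simpl in E.
  pose proof (N_same _ _ _ beta lam nu b [] R Hnu) as E2.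
  assert (Ncyl nu [b; negb b] = Ncyl nu [b] - Ncyl nu [b; b]) by lra.
  rewrite H2, Rmult_minus_distr_r, E2. ring.
Qed.

Lemma Hlev_pos H H0 H1 b k : reduced_double_well H H0 H1 -> (1 <= k)%nat -> 0 < Hlev H0 H1 b k.
Proof.
  intros R Hk. destruct R as [_ [_ [_ [_ [_ [_ [A [B _]]]]]]]]. destruct b; simpl; auto.
Qed.

Lemma N_pos H H0 H1 beta lam nu b : reduced_double_well H H0 H1 -> 0 < beta -> is_eigenmeasure H beta lam nu ->
  0 < Ncyl nu [b; negb b].
Proof.
  intros R Hb Hnu. pose proof Hnu as [P _]. pose proof (lam_gt1 _ _ _ _ _ _ R Hb Hnu) as Hl.
  assert (Tr : forall c, 0 < Ncyl nu [c; negb c] -> 0 < Ncyl nu [negb c; c]).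
  { intros c Hc. pose proof (N_sum _ _ _ beta lam nu (negb c) R Hb Hnu) as Sm.
    rewrite negb_involutive in Sm.
    pose proof (infsum_ge _ _ O Sm) as G. simpl in G.
    assert (0 < / (lam * 1) * exp (- beta * Hlev H0 H1 (negb c) 1)).
    { apply Rmult_lt_0_compat; [apply Rinv_0_lt_compat; lra| apply exp_pos]. }
    assert (0 < / (lam * 1) * exp (- beta * Hlev H0 H1 (negb c) 1) * Ncyl nu [c; negb c]) by (apply Rmult_lt_0_compat; auto).
    eapply Rlt_le_trans; [eassumption|]. apply G. intros n.
    apply Rmult_le_pos; [apply Rmult_le_pos; [left; apply Rinv_0_lt_compat; apply Rmult_lt_0_compat; [lra| apply pow_lt; lra]| left; apply exp_pos]| apply N_nonneg; auto]. }
  assert (Some : exists c, 0 < Ncyl nu [c; negb c]).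
  { pose proof (N_split nu [] false P) as E. rewrite N_nil in E by auto. simpl in E.
    pose proof (N_nonneg nu [false] P). pose proof (N_nonneg nu [true] P).
    destruct (Rlt_or_le 0 (Ncyl nu [false])) as [C|C].
    - exists false. pose proof (N_b_nb _ _ _ beta lam nu false R Hnu) as Q.
      apply Rmult_lt_reg_r with (r := lam); [lra|]. rewrite Q. nra.
    - exists true. pose proof (N_b_nb _ _ _ beta lam nu true R Hnu) as Q.
      apply Rmult_lt_reg_r with (r := lam); [lra|]. rewrite Q. nra. }
  destruct Some as [c Hc]. destruct (Bool.bool_dec b c) as [->|D]; auto.
  replace b with (negb c) by (destruct b, c; simpl in *; congruence).
  rewrite negb_involutive. auto.
Qed.

Lemma infsum_ext u v l : (forall n, u n = v n) -> infinite_sum u l -> infinite_sum v l.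
Proof.
  intros E Hu e He. destruct (Hu e He) as [N HN]. exists N. intros n Hn.
  rewrite <- (sum_eq u v n) by auto. apply HN; auto.
Qed.

Lemma Fs_val H H0 H1 beta lam nu b : reduced_double_well H H0 H1 -> 0 < beta -> is_eigenmeasure H beta lam nu ->
  Fs H0 H1 beta lam b = Ncyl nu [b; negb b] / Ncyl nu [negb b; b].
Proof.
  intros R Hb Hnu. pose proof (N_pos _ _ _ beta lam nu (negb b) R Hb Hnu) as Pn.
  rewrite negb_involutive in Pn.
  unfold Fs, Fb. apply series_eq.
  pose proof (infsum_scal _ _ (/ Ncyl nu [negb b; b]) (N_sum _ _ _ beta lam nu b R Hb Hnu)) as Sm.
  unfold Rdiv. rewrite Rmult_comm.
  eapply infsum_ext; [|exact Sm]. intros n. simpl. assert (lam ^ n <> 0) by (apply pow_nonzero; pose proof (lam_gt1 _ _ _ _ _ _ R Hb Hnu); lra). assert (lam <> 0) by (pose proof (lam_gt1 _ _ _ _ _ _ R Hb Hnu); lra). field. repeat split; auto; lra.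
Qed.

Lemma F_prod H H0 H1 beta lam nu : reduced_double_well H H0 H1 -> 0 < beta -> is_eigenmeasure H beta lam nu ->
  Fs H0 H1 beta lam false * Fs H0 H1 beta lam true = 1.
Proof.
  intros R Hb Hnu. rewrite !(Fs_val H _ _ beta lam nu) by auto. simpl.
  pose proof (N_pos _ _ _ beta lam nu false R Hb Hnu). pose proof (N_pos _ _ _ beta lam nu true R Hb Hnu).
  simpl in *. field. lra.
Qed.

Lemma F_pos H H0 H1 beta lam nu b : reduced_double_well H H0 H1 -> 0 < beta -> is_eigenmeasure H beta lam nu ->
  0 < Fs H0 H1 beta lam b.
Proof.
  intros R Hb Hnu. rewrite (Fs_val H _ _ beta lam nu) by auto.
  pose proof (N_pos _ _ _ beta lam nu b R Hb Hnu). pose proof (N_pos _ _ _ beta lam nu (negb b) R Hb Hnu).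
  rewrite negb_involutive in H3. apply Rdiv_lt_0_compat; auto.
Qed.

Lemma series_Series u : ex_series u -> series u = Series u.
Proof. intros [l Hl]. rewrite (is_series_unique _ _ Hl). apply series_eq. apply is_series_Reals; auto. Qed.

Lemma is_series_ext' (a b : nat -> R) l : (forall n, a n = b n) -> is_series a l -> is_series b l.
Proof. intros E H. apply (is_series_ext a); auto. Qed.

Lemma geom_shift lam : 1 < lam -> is_series (fun j => / lam ^ S j) (/ (lam - 1)).
Proof.
  intros Hl. assert (Hq : Rabs (/ lam) < 1).
  { rewrite Rabs_right. apply inv_lt1; lra. left; apply Rinv_0_lt_compat; lra. }
  pose proof (is_series_scal (/ lam) _ _ (is_series_geom _ Hq)) as G.
  eapply is_series_ext'; [|replace (/ (lam - 1)) with (scal (/ lam) (/ (1 - / lam))); [exact G|]].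
  - intros n. unfold scal; simpl; unfold mult; simpl. rewrite pow_inv. field. split; [apply pow_nonzero|]; lra.
  - unfold scal; simpl; unfold mult; simpl. field. split; lra.
Qed.

Lemma ex_series_cmp (a b : nat -> R) : (forall n, Rabs (a n) <= b n) -> ex_series b -> ex_series a.
Proof. intros H Hb. apply (ex_series_le a b); auto. Qed.

Lemma series_abs_bound (a D : nat -> R) Dl : (forall n, Rabs (a n) <= D n) -> is_series D Dl -> Rabs (Series a) <= Dl.
Proof.
  intros Hb HD.
  assert (E1 : ex_series (fun n => Rabs (a n))).
  { apply (ex_series_cmp _ D); [intros n; rewrite Rabs_Rabsolu; auto| exists Dl; auto]. }
  eapply Rle_trans; [apply Series_Rabs; auto|].
  rewrite <- (is_series_unique _ _ HD). apply Series_le; [|exists Dl; auto].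
  intros n; split; [apply Rabs_pos| auto].
Qed.

Lemma expdiff beta a b m : 0 <= beta -> m <= a -> m <= b ->
  Rabs (exp (- beta * a) - exp (- beta * b)) <= beta * Rabs (a - b) * exp (- beta * m).
Proof.
  intros Hb Ha Hbm.
  assert (K : forall a b, m <= a -> a <= b -> Rabs (exp (- beta * a) - exp (- beta * b)) <= beta * (b - a) * exp (- beta * m)).
  { clear a b Ha Hbm. intros a b Ha Hab.
    replace (exp (- beta * b)) with (exp (- beta * a) * exp (- (beta * (b - a)))) by (rewrite <- exp_plus; f_equal; ring).
    pose proof (exp_ineq1_le (- (beta * (b - a)))) as E1.
    assert (E2 : exp (- (beta * (b - a))) <= 1) by (rewrite <- exp_0; apply exp_le_mono; nra).
    assert (E3 : exp (- beta * a) <= exp (- beta * m)) by (apply exp_le_mono; nra).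
    pose proof (exp_pos (- beta * a)).
    rewrite Rabs_right by nra.
    replace (exp (- beta * a) - exp (- beta * a) * exp (- (beta * (b - a)))) with (exp (- beta * a) * (1 - exp (- (beta * (b - a))))) by ring.
    apply Rle_trans with (exp (- beta * a) * (beta * (b - a))).
    - apply Rmult_le_compat_l; lra.
    - rewrite (Rmult_comm (beta * (b - a))). apply Rmult_le_compat_r; nra. }
  destruct (Rle_or_lt a b) as [L|L].
  - rewrite (Rabs_left1 (a - b)) by lra. replace (- (a - b)) with (b - a) by ring. apply K; auto.
  - rewrite Rabs_minus_sym. rewrite (Rabs_right (a - b)) by lra. apply K; auto; lra.
Qed.

Lemma Series_nonneg (a : nat -> R) : (forall n, 0 <= a n) -> ex_series a -> 0 <= Series a.
Proof.
  intros Hp He. replace 0 with (Series (fun n => 0 * a n)).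
  - apply Series_le; auto. intros n; rewrite Rmult_0_l; split; [lra| auto].
  - rewrite Series_scal_l. ring.
Qed.

Definition Aa (h : nat -> R) beta lam n j := / lam ^ S j * exp (- beta * h (S (n + j))).
Definition A h beta lam n := Series (Aa h beta lam n).

Definition hpos (h : nat -> R) := forall k, (1 <= k)%nat -> 0 <= h k.

Lemma Aa_bound h beta lam n j : hpos h -> 0 <= beta -> 1 < lam -> 0 < Aa h beta lam n j <= / lam ^ S j.
Proof.
  intros Hh Hb Hl. unfold Aa.
  assert (0 < / lam ^ S j) by (apply Rinv_0_lt_compat, pow_lt; lra).
  assert (exp (- beta * h (S (n + j))) <= 1).
  { rewrite <- exp_0. apply exp_le_mono. specialize (Hh (S (n + j)) ltac:(lia)). nra. }
  pose proof (exp_pos (- beta * h (S (n + j)))). split; [apply Rmult_lt_0_compat; auto| nra].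
Qed.

Lemma A_ex h beta lam n : hpos h -> 0 <= beta -> 1 < lam -> ex_series (Aa h beta lam n).
Proof.
  intros Hh Hb Hl. apply (ex_series_cmp _ (fun j => / lam ^ S j)); [| exists (/ (lam - 1)); apply geom_shift; auto].
  intros j. destruct (Aa_bound h beta lam n j Hh Hb Hl). rewrite Rabs_right; lra.
Qed.

Lemma A_is h beta lam n : hpos h -> 0 <= beta -> 1 < lam -> is_series (Aa h beta lam n) (A h beta lam n).
Proof. intros. apply Series_correct. apply A_ex; auto. Qed.

Lemma A_rec h beta lam n : hpos h -> 0 <= beta -> 1 < lam ->
  lam * A h beta lam n = exp (- beta * h (S n)) + A h beta lam (S n).
Proof.
  intros Hh Hb Hl.
  pose proof (is_series_scal lam _ _ (A_is h beta lam n Hh Hb Hl)) as S1.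
  assert (S2 : is_series (fun k => lam * Aa h beta lam n (S k)) (lam * A h beta lam n - exp (- beta * h (S n)))).
  { apply (is_series_incr_1 (fun k => lam * Aa h beta lam n k)).
    eapply is_series_ext'; [|replace (plus _ _) with (scal lam (A h beta lam n)); [exact S1|]].
    - intros k; reflexivity.
    - unfold Aa. unfold plus, scal; simpl. unfold plus, mult; simpl. rewrite Nat.add_0_r. simpl.
      field. lra. }
  assert (S3 : is_series (fun k => lam * Aa h beta lam n (S k)) (A h beta lam (S n))).
  { eapply is_series_ext'; [|apply (A_is h beta lam (S n) Hh Hb Hl)].
    intros k. unfold Aa. rewrite Nat.add_succ_r. simpl. field. split; [apply pow_nonzero|]; lra. }
  pose proof (is_series_unique _ _ S2). pose proof (is_series_unique _ _ S3). lra.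
Qed.

Lemma A_pos h beta lam n : hpos h -> 0 <= beta -> 1 < lam -> 0 < A h beta lam n.
Proof.
  intros Hh Hb Hl. pose proof (A_rec h beta lam n Hh Hb Hl) as E.
  assert (0 <= A h beta lam (S n)).
  { unfold A. apply Series_nonneg; [|apply A_ex; auto].
    intros j. destruct (Aa_bound h beta lam (S n) j Hh Hb Hl). lra. }
  pose proof (exp_pos (- beta * h (S n))).
  assert (0 < lam * A h beta lam n) by lra.
  apply Rmult_lt_reg_l with lam; lra.
Qed.

Lemma A_le h beta lam n : hpos h -> 0 <= beta -> 1 < lam -> A h beta lam n <= / (lam - 1).
Proof.
  intros Hh Hb Hl. unfold A. rewrite <- (is_series_unique _ _ (geom_shift lam Hl)).
  apply Series_le; [|exists (/ (lam - 1)); apply geom_shift; auto].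
  intros j. destruct (Aa_bound h beta lam n j Hh Hb Hl). lra.
Qed.

Lemma A_lim h L beta lam : hpos h -> 0 <= beta -> 1 < lam -> Un_cv h L ->
  forall e, 0 < e -> exists N, forall n, (n >= N)%nat -> Rabs (A h beta lam n - exp (- beta * L) / (lam - 1)) < e.
Proof.
  intros Hh Hb Hl Hc e He.
  assert (L0 : 0 <= L).
  { apply Rnot_lt_le; intros HL. destruct (Hc (- L)) as [N HN]; [lra|].
    specialize (HN (S N) ltac:(lia)). specialize (Hh (S N) ltac:(lia)). unfold R_dist in HN.
    apply Rabs_def2 in HN. lra. }
  set (e' := e * (lam - 1) / (2 * (beta + 1))).
  assert (He' : 0 < e') by (unfold e'; apply Rdiv_lt_0_compat; nra).
  destruct (Hc e' He') as [N HN]. exists N. intros n Hn.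
  assert (Hd : forall j, Rabs (Aa h beta lam n j - / lam ^ S j * exp (- beta * L)) <= / lam ^ S j * (beta * e')).
  { intros j. unfold Aa. rewrite <- Rmult_minus_distr_l, Rabs_mult.
    assert (0 < / lam ^ S j) by (apply Rinv_0_lt_compat, pow_lt; lra).
    rewrite Rabs_right by lra. apply Rmult_le_compat_l; [lra|].
    eapply Rle_trans; [apply (expdiff beta _ _ 0); auto; apply Hh; lia|].
    rewrite Rmult_0_r, exp_0, Rmult_1_r. apply Rmult_le_compat_l; auto.
    specialize (HN (S (n + j)) ltac:(lia)). unfold R_dist in HN. lra. }
  assert (Ser : is_series (fun j => Aa h beta lam n j - / lam ^ S j * exp (- beta * L)) (A h beta lam n - exp (- beta * L) / (lam - 1))).
  { pose proof (is_series_minus _ _ _ _ (A_is h beta lam n Hh Hb Hl) (is_series_scal_r (exp (- beta * L)) _ _ (geom_shift lam Hl))) as M.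
    eapply is_series_ext'; [|replace (_ - _) with (plus (A h beta lam n) (opp (mult (/ (lam - 1)) (exp (- beta * L))))); [exact M|]].
    - intros j; reflexivity.
    - unfold plus, opp, mult; simpl. unfold Rdiv. ring. }
  pose proof (series_abs_bound _ _ _ Hd (is_series_scal_r (beta * e') _ _ (geom_shift lam Hl))) as B.
  rewrite (is_series_unique _ _ Ser) in B.
  eapply Rle_lt_trans; [exact B|]. unfold mult; simpl.
  unfold e'. assert (0 < lam - 1) by lra.
  replace (/ (lam - 1) * (beta * (e * (lam - 1) / (2 * (beta + 1))))) with (e * (beta / (2 * (beta + 1)))) by (field; lra).
  assert (beta / (2 * (beta + 1)) < 1).
  { apply Rmult_lt_reg_r with (2 * (beta + 1)); [lra|]. unfold Rdiv. rewrite Rmult_assoc, Rinv_l by lra. lra. }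
  nra.
Qed.

Lemma Lop_sym H beta f x b : Lop H beta f x =
  exp (- beta * H (scons b x)) * f (scons b x) + exp (- beta * H (scons (negb b) x)) * f (scons (negb b) x).
Proof. unfold Lop. destruct b; simpl; ring. Qed.

Definition Kb H0 H1 beta lam (b : bool) := if b then 1 else Fs H0 H1 beta lam false.

Definition Psi H0 H1 Hinf0 Hinf1 beta lam (x : Sigma) : R :=
  match fc x with
  | Some n => Kb H0 H1 beta lam (x O) * A (Hlev H0 H1 (negb (x O))) beta lam n
  | None => Kb H0 H1 beta lam (x O) * (exp (- beta * Hinfb Hinf0 Hinf1 (negb (x O))) / (lam - 1))
  end.

Lemma hpos_lev H H0 H1 c : reduced_double_well H H0 H1 -> hpos (Hlev H0 H1 c).
Proof. intros R k Hk. left. apply (Hlev_pos H); auto. Qed.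

Lemma A0_F H H0 H1 beta lam c : reduced_double_well H H0 H1 -> 0 <= beta -> 1 < lam ->
  A (Hlev H0 H1 c) beta lam 0 = Fs H0 H1 beta lam c.
Proof.
  intros R Hb Hl. unfold Fs, Fb. rewrite series_Series.
  - reflexivity.
  - apply (A_ex _ beta lam 0); auto. apply (hpos_lev H); auto.
Qed.

Lemma Kb_rel H H0 H1 beta lam nu b : reduced_double_well H H0 H1 -> 0 < beta -> is_eigenmeasure H beta lam nu ->
  Kb H0 H1 beta lam b = Kb H0 H1 beta lam (negb b) * Fs H0 H1 beta lam b.
Proof.
  intros R Hb Hnu. destruct b; simpl.
  - rewrite (F_prod H _ _ beta lam nu); auto.
  - ring.
Qed.

Lemma Kb_pos H H0 H1 beta lam nu b : reduced_double_well H H0 H1 -> 0 < beta -> is_eigenmeasure H beta lam nu ->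
  0 < Kb H0 H1 beta lam b.
Proof. intros R Hb Hnu. destruct b; simpl; [lra| apply (F_pos H _ _ beta lam nu); auto]. Qed.

Lemma Psi_eig H H0 H1 Hinf0 Hinf1 beta lam nu : reduced_double_well H H0 H1 -> Un_cv H0 Hinf0 -> Un_cv H1 Hinf1 ->
  0 < beta -> is_eigenmeasure H beta lam nu ->
  forall x, Lop H beta (Psi H0 H1 Hinf0 Hinf1 beta lam) x = lam * Psi H0 H1 Hinf0 Hinf1 beta lam x.
Proof.
  intros R C0 C1 Hb Hnu x. pose proof (lam_gt1 _ _ _ _ _ _ R Hb Hnu) as Hl.
  set (b := x O). rewrite (Lop_sym H beta _ x b).
  assert (X1 : Psi H0 H1 Hinf0 Hinf1 beta lam (scons (negb b) x) = Kb H0 H1 beta lam b).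
  { unfold Psi. rewrite fc_scons_diff by (unfold b; destruct (x O); simpl; congruence). simpl.
    rewrite negb_involutive. rewrite (A0_F H) by (auto; lra). symmetry. apply (Kb_rel H _ _ beta lam nu); auto. }
  rewrite X1. rewrite (H_same H H0 H1 b x R eq_refl). rewrite Rmult_0_r, exp_0, Rmult_1_l.
  unfold Psi. rewrite (fc_scons_same b x eq_refl). simpl. fold b.
  assert (Hx : x O = negb (negb b)) by (rewrite negb_involutive; auto).
  destruct (fc x) as [n|] eqn:F.
  - rewrite (H_block H H0 H1 (negb b) x n R Hx F).
    rewrite Rmult_comm with (r1 := lam). rewrite Rmult_assoc. rewrite (Rmult_comm _ lam).
    rewrite (A_rec _ beta lam n); [ring| apply (hpos_lev H); auto| lra| lra].
  - rewrite (H_inf H H0 H1 Hinf0 Hinf1 (negb b) x R C0 C1 Hx F). field. lra.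
Qed.

Lemma Psi_pos H H0 H1 Hinf0 Hinf1 beta lam nu : reduced_double_well H H0 H1 ->
  0 < beta -> is_eigenmeasure H beta lam nu ->
  forall x, 0 < Psi H0 H1 Hinf0 Hinf1 beta lam x.
Proof.
  intros R Hb Hnu x. pose proof (lam_gt1 _ _ _ _ _ _ R Hb Hnu) as Hl.
  pose proof (Kb_pos H H0 H1 beta lam nu (x O) R Hb Hnu).
  unfold Psi. destruct (fc x).
  - apply Rmult_lt_0_compat; auto. apply A_pos; [apply (hpos_lev H); auto| lra| lra].
  - apply Rmult_lt_0_compat; auto. apply Rdiv_lt_0_compat; [apply exp_pos| lra].
Qed.

Lemma Psi_cont H H0 H1 Hinf0 Hinf1 beta lam nu : reduced_double_well H H0 H1 -> Un_cv H0 Hinf0 -> Un_cv H1 Hinf1 ->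
  0 < beta -> is_eigenmeasure H beta lam nu ->
  contS (Psi H0 H1 Hinf0 Hinf1 beta lam).
Proof.
  intros R C0 C1 Hb Hnu x e He. pose proof (lam_gt1 _ _ _ _ _ _ R Hb Hnu) as Hl.
  destruct (fc x) as [n|] eqn:F.
  - exists (S (S n)). intros y Hy. pose proof (fc_some x n F) as [F1 F2].
    assert (Y0 : y O = x O) by (symmetry; apply Hy; lia).
    assert (Fy : fc y = Some n).
    { apply fc_char; rewrite Y0.
      - rewrite <- (Hy (S n)) by lia. auto.
      - intros i Hi. rewrite <- (Hy i) by lia. auto. }
    unfold Psi. rewrite F, Fy, Y0. rewrite Rminus_diag, Rabs_R0; auto.
  - set (b := x O). set (Kv := Kb H0 H1 beta lam b).
    assert (Kp : 0 < Kv) by (apply (Kb_pos H H0 H1 beta lam nu); auto).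
    assert (Cv : Un_cv (Hlev H0 H1 (negb b)) (Hinfb Hinf0 Hinf1 (negb b))) by (destruct (negb b); auto).
    destruct (A_lim _ _ beta lam (hpos_lev H H0 H1 (negb b) R) ltac:(lra) Hl Cv (e / Kv)) as [N HN].
    { apply Rdiv_lt_0_compat; auto. }
    exists (S N). intros y Hy. pose proof (fc_none x F) as Fc.
    assert (Y0 : y O = b) by (symmetry; apply Hy; lia).
    unfold Psi. rewrite F. fold b. rewrite Y0. fold Kv.
    destruct (fc y) as [m|] eqn:Fy.
    + pose proof (fc_some y m Fy) as [G1 G2].
      assert (m >= N)%nat.
      { destruct (Compare_dec.le_lt_dec N m) as [L|L]; auto. exfalso. apply G1. rewrite <- (Hy (S m)) by lia. rewrite Fc.
        rewrite <- (Hy O) by lia. auto. }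
      specialize (HN m H2).
      rewrite <- Rmult_minus_distr_l, Rabs_mult, Rabs_right by lra.
      apply Rmult_lt_reg_r with (/ Kv). apply Rinv_0_lt_compat; auto.
      rewrite (Rmult_comm Kv), Rmult_assoc, Rinv_r, Rmult_1_r by lra. auto.
    + rewrite Rminus_diag, Rabs_R0; auto.
Qed.

Definition pref (y : Sigma) (N : nat) (z : Sigma) : Sigma := fun i => if Nat.ltb i N then y i else z (i - N)%nat.

Lemma pref_0 y z : pref y 0 z = z.
Proof. apply functional_extensionality; intros i. unfold pref. simpl. f_equal; lia. Qed.

Lemma pref_S y N z : pref y (S N) z = scons (y O) (pref (stl y) N z).
Proof. apply functional_extensionality; intros [|i]; unfold pref; simpl; auto. Qed.

Lemma pref_agree y N z : agree N y (pref y N z).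
Proof. intros i Hi. unfold pref. rewrite (proj2 (Nat.ltb_lt _ _)) by auto. auto. Qed.

Lemma eig_unique H beta lam (Phi Psi : Sigma -> R) : contS H -> contS Phi -> contS Psi ->
  (forall x, 0 < Phi x) -> (forall x, 0 < Psi x) ->
  (forall x, Lop H beta Phi x = lam * Phi x) -> (forall x, Lop H beta Psi x = lam * Psi x) ->
  exists t, 0 < t /\ forall x, Phi x = t * Psi x.
Proof.
  intros Hc Cf Cp Pf Pp Ef Ep.
  destruct (contS_min (fun x => Phi x * / Psi x)) as [xs Hxs].
  { apply contS_mult; auto. apply contS_inv; auto. intros x; specialize (Pp x); lra. }
  set (t := Phi xs * / Psi xs).
  assert (Ht : 0 < t) by (unfold t; apply Rmult_lt_0_compat; [auto| apply Rinv_0_lt_compat; auto]).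
  exists t. split; auto.
  set (h := fun x => Phi x - t * Psi x).
  assert (Hpos : forall x, 0 <= h x).
  { intros x. unfold h. specialize (Hxs x). fold t in Hxs. specialize (Pp x).
    apply Rmult_le_compat_r with (r := Psi x) in Hxs; [|lra].
    rewrite Rmult_assoc, Rinv_l, Rmult_1_r in Hxs by lra. lra. }
  assert (Hz : h xs = 0) by (unfold h, t; field; specialize (Pp xs); lra).
  assert (Prop1 : forall x c, h x = 0 -> h (scons c x) = 0).
  { intros x c Hx.
    assert (E : lam * h x = exp (- beta * H (scons c x)) * h (scons c x) + exp (- beta * H (scons (negb c) x)) * h (scons (negb c) x)).
    { unfold h. rewrite Rmult_minus_distr_l, <- Ef. replace (lam * (t * Psi x)) with (t * (lam * Psi x)) by ring. rewrite <- Ep.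
      rewrite (Lop_sym H beta Phi x c), (Lop_sym H beta Psi x c). ring. }
    rewrite Hx, Rmult_0_r in E.
    pose proof (exp_pos (- beta * H (scons c x))). pose proof (exp_pos (- beta * H (scons (negb c) x))).
    pose proof (Hpos (scons c x)). pose proof (Hpos (scons (negb c) x)).
    assert (Q : exp (- beta * H (scons c x)) * h (scons c x) = 0) by nra.
    apply Rmult_integral in Q. destruct Q; lra. }
  assert (Prop2 : forall N y, h (pref y N xs) = 0).
  { induction N; intros y. rewrite pref_0; auto. rewrite pref_S. apply Prop1. apply IHN. }
  assert (Ch : contS h).
  { replace h with (fun x => Phi x + (-t) * Psi x) by (apply functional_extensionality; intros; unfold h; ring).
    apply contS_plus; auto. apply contS_mult; auto. apply contS_const. }
  intros x. apply NNPP. intros Hne.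
  assert (Hx : 0 < h x) by (destruct (Hpos x); auto; exfalso; apply Hne; unfold h in H0; lra).
  destruct (Ch x (h x) Hx) as [N HN].
  specialize (HN (pref x N xs) (pref_agree x N xs)). rewrite Prop2 in HN.
  rewrite Rabs_left in HN by lra. lra.
Qed.

Lemma pow_binom u n : 0 <= u -> 1 + INR n * u + INR n * (INR n - 1) / 2 * u ^ 2 <= (1 + u) ^ n.
Proof.
  intros Hu. induction n.
  - simpl. lra.
  - rewrite S_INR. simpl (_ ^ S n).
    assert (C : 0 <= INR n * (INR n - 1)).
    { destruct n. simpl; lra. rewrite S_INR. pose proof (pos_INR n). nra. }
    assert (U3 : 0 <= INR n * (INR n - 1) / 2 * u ^ 3).
    { apply Rmult_le_pos; [lra| apply pow_le; lra]. }
    apply Rle_trans with ((1 + u) * (1 + INR n * u + INR n * (INR n - 1) / 2 * u ^ 2)).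
    + simpl in *. nra.
    + apply Rmult_le_compat_l; lra.
Qed.

Lemma n_pow_small lam : 1 < lam -> forall e, 0 < e -> exists N, forall n, (n >= N)%nat -> INR n / lam ^ n < e.
Proof.
  intros Hl e He. set (u := lam - 1).
  assert (Hu : 0 < u) by (unfold u; lra).
  destruct (archimed (4 / (e * u ^ 2))) as [Ar _].
  destruct (INR_unbounded (4 / (e * u ^ 2) + 2)) as [N HN].
  exists N. intros n Hn.
  assert (Hn2 : INR n > 4 / (e * u ^ 2) + 2) by (apply Rlt_le_trans with (INR N); [lra| apply le_INR; lia]).
  assert (P : 0 < 4 / (e * u ^ 2)) by (apply Rdiv_lt_0_compat; [lra| apply Rmult_lt_0_compat; [lra| apply pow_lt; lra]]).
  pose proof (pow_binom u n (Rlt_le _ _ Hu)) as B. replace (1 + u) with lam in B by (unfold u; ring).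
  assert (Lp : 0 < lam ^ n) by (apply pow_lt; lra).
  apply Rmult_lt_reg_r with (lam ^ n); auto. unfold Rdiv. rewrite Rmult_assoc, Rinv_l, Rmult_1_r by lra.
  assert (e * (INR n * (INR n - 1) / 2 * u ^ 2) > INR n).
  { assert (INR n - 1 > 4 / (e * u ^ 2)) by lra.
    assert (e * u^2 * (INR n - 1) > 4).
    { apply Rmult_gt_compat_l with (r := e * u ^ 2) in H; [|apply Rmult_lt_0_compat; [lra| apply pow_lt; lra]].
      replace (e * u ^ 2 * (4 / (e * u ^ 2))) with 4 in H by (field; repeat split; try (apply pow_nonzero); lra). lra. }
    assert (INR n > 0) by lra. nra. }
  assert (0 <= INR n * u) by (apply Rmult_le_pos; [apply pos_INR| lra]).
  nra.
Qed.

Lemma Ftb_tails_inf h beta lam Sv : hpos h -> 0 <= beta -> 1 < lam ->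
  infinite_sum (fun n => A h beta lam n / lam ^ n) Sv -> infinite_sum (fun k => INR (S k) * / lam ^ S k * exp (- beta * h (S k))) Sv.
Proof.
  intros Hh Hb Hl Hs.
  set (a := fun k => / lam ^ S k * exp (- beta * h (S k))).
  set (T := fun n => A h beta lam n / lam ^ n).
  assert (Trec : forall n, T n = a n + T (S n)).
  { intros n. unfold T, a. pose proof (A_rec h beta lam n Hh Hb Hl) as E.
    assert (lam ^ n <> 0) by (apply pow_nonzero; lra).
    apply Rmult_eq_reg_l with (lam ^ S n); [|apply pow_nonzero; lra]. simpl.
    replace (lam * lam ^ n * (A h beta lam n / lam ^ n)) with (lam * A h beta lam n) by (field; auto).
    rewrite E. field. split; auto; lra. }
  assert (Part : forall N, sum_f_R0 T N = sum_f_R0 (fun k => INR (S k) * a k) N + INR (S N) * T (S N)).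
  { induction N.
    - simpl. rewrite (Trec O). ring.
    - rewrite !tech5, IHN. rewrite (Trec (S N)). rewrite !S_INR. ring. }
  assert (Tb : forall n, 0 <= T n <= / lam ^ n / (lam - 1)).
  { intros n. unfold T. assert (0 < / lam ^ n) by (apply Rinv_0_lt_compat, pow_lt; lra).
    pose proof (A_pos h beta lam n Hh Hb Hl). pose proof (A_le h beta lam n Hh Hb Hl).
    unfold Rdiv. split; [left; apply Rmult_lt_0_compat; auto|]. rewrite Rmult_comm. apply Rmult_le_compat_l; lra. }
  apply (infsum_from_partial _ _ (fun N => (Sv - sum_f_R0 T N) + INR (S N) * T (S N))).
  - intros N. rewrite Part. replace (fun k => INR (S k) * / lam ^ S k * exp (- beta * h (S k))) with (fun k => INR (S k) * a k)
      by (apply functional_extensionality; intros; unfold a; ring). ring.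
  - intros e He. destruct (Hs (e/2)) as [N1 HN1]; [lra|].
    destruct (n_pow_small lam Hl (e * (lam - 1) / 4)) as [N2 HN2]; [apply Rdiv_lt_0_compat; nra|].
    exists (max N1 N2). intros n Hn.
    specialize (HN1 n ltac:(lia)). unfold R_dist in HN1. rewrite Rabs_minus_sym in HN1.
    specialize (HN2 (S n) ltac:(lia)).
    destruct (Tb (S n)) as [T1 T2].
    assert (INR (S n) * T (S n) <= INR (S n) / lam ^ S n / (lam - 1)).
    { replace (INR (S n) / lam ^ S n / (lam - 1)) with (INR (S n) * (/ lam ^ S n / (lam - 1))) by (unfold Rdiv; ring).
      apply Rmult_le_compat_l; [apply pos_INR| auto]. }
    assert (INR (S n) / lam ^ S n / (lam - 1) < e / 4).
    { apply Rmult_lt_reg_r with (lam - 1); [lra|].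
      replace (INR (S n) / lam ^ S n / (lam - 1) * (lam - 1)) with (INR (S n) / lam ^ S n) by (field; repeat split; try apply pow_nonzero; lra).
      replace (e / 4 * (lam - 1)) with (e * (lam - 1) / 4) by field. auto. }
    assert (0 <= INR (S n) * T (S n)) by (apply Rmult_le_pos; [apply pos_INR| auto]).
    eapply Rle_lt_trans; [apply Rabs_triang|]. rewrite (Rabs_right (INR (S n) * T (S n))) by lra. fold T in HN1. lra.
Qed.

Lemma Ftb_tails h beta lam Sv : hpos h -> 0 <= beta -> 1 < lam ->
  infinite_sum (fun n => A h beta lam n / lam ^ n) Sv -> Ftb h beta lam = Sv.
Proof. intros. unfold Ftb. apply series_eq. apply Ftb_tails_inf; auto. Qed.

Lemma nuPsi_cyl H H0 H1 Hinf0 Hinf1 beta lam nu b : reduced_double_well H H0 H1 -> Un_cv H0 Hinf0 -> Un_cv H1 Hinf1 ->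
  0 < beta -> is_eigenmeasure H beta lam nu ->
  nu (fun x => Psi H0 H1 Hinf0 Hinf1 beta lam x * cyl [b] x) =
    Kb H0 H1 beta lam b * Ncyl nu [b; negb b] * Ftb (Hlev H0 H1 (negb b)) beta lam /\
  0 < Ftb (Hlev H0 H1 (negb b)) beta lam.
Proof.
  intros R C0 C1 Hb Hnu. pose proof Hnu as [P _]. pose proof (lam_gt1 _ _ _ _ _ _ R Hb Hnu) as Hl.
  pose proof R as [Hc _].
  set (Ps := Psi H0 H1 Hinf0 Hinf1 beta lam).
  assert (Cps : contS Ps) by (apply (Psi_cont H _ _ _ _ beta lam nu); auto).
  assert (Pps : forall x, 0 < Ps x) by (apply (Psi_pos H _ _ _ _ beta lam nu); auto).
  set (h := Hlev H0 H1 (negb b)).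
  assert (Hh : hpos h) by (apply (hpos_lev H); auto).
  set (K := Kb H0 H1 beta lam b).
  set (Q := fun n => nu (fun x => Ps x * cyl (repeat b (S n)) x)).
  assert (Pw : forall n x, Ps x * cyl (repeat b (S n)) x =
     K * A h beta lam n * cyl (repeat b (S n) ++ [negb b]) x + Ps x * cyl (repeat b (S (S n))) x).
  { intros n x. rewrite (cyl_split' (repeat b (S n)) (negb b) x). rewrite negb_involutive, repeat_snoc.
    rewrite Rmult_plus_distr_l. f_equal.
    destruct (cyl_01 (repeat b (S n) ++ [negb b]) x) as [Z|Z]; rewrite Z; [ring|].
    assert (M : mp (repeat (negb (negb b)) (S n) ++ [negb b]) x = true).
    { rewrite negb_involutive. unfold cyl in Z. destruct (mp _ x); auto. lra. }
    destruct (mp_block _ _ _ M) as [X F]. rewrite negb_involutive in X.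
    unfold Ps, Psi. rewrite F, X. fold K h. ring. }
  assert (Qrec : forall n, Q n = K * A h beta lam n * Ncyl nu (repeat b (S n) ++ [negb b]) + Q (S n)).
  { intros n. unfold Q. rewrite (nu_ext nu _ _ (Pw n)). rewrite nu_add; auto.
    - rewrite nu_scal; auto. apply contS_cyl.
    - apply contS_mult; [apply contS_const| apply contS_cyl].
    - apply contS_mult; auto. apply contS_cyl. }
  assert (Part : forall M, Q O = sum_f_R0 (fun k => K * A h beta lam k * Ncyl nu (repeat b (S k) ++ [negb b])) M + Q (S M)).
  { induction M. simpl. apply Qrec. rewrite tech5, IHM, (Qrec (S M)). ring. }
  set (c := K * Ncyl nu [b; negb b]).
  assert (Hcp : 0 < c).
  { unfold c. apply Rmult_lt_0_compat. apply (Kb_pos H _ _ beta lam nu); auto. apply (N_pos H H0 H1 beta lam nu); auto. }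
  assert (Hs : forall k, K * A h beta lam k * Ncyl nu (repeat b (S k) ++ [negb b]) = c * (A h beta lam k / lam ^ k)).
  { intros k. unfold c. rewrite <- (N_rep H H0 H1 beta lam nu b [negb b] k R Hnu). field. apply pow_nonzero; lra. }
  destruct (contS_max Ps Cps) as [xm Hxm].
  assert (Tail : forall M, 0 <= Q (S M) <= Ps xm / lam ^ S M).
  { intros M. unfold Q. split.
    - apply nu_pos; auto. apply contS_mult; auto; apply contS_cyl.
      intros x. specialize (Pps x). destruct (cyl_01 (repeat b (S (S M))) x) as [Z|Z]; rewrite Z; lra.
    - apply Rle_trans with (nu (fun x => Ps xm * cyl (repeat b (S (S M))) x)).
      + apply nu_mono; auto. apply contS_mult; auto; apply contS_cyl. apply contS_mult; [apply contS_const| apply contS_cyl].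
        intros x. specialize (Hxm x). destruct (cyl_01 (repeat b (S (S M))) x) as [Z|Z]; rewrite Z; lra.
      + rewrite nu_scal by (auto; apply contS_cyl).
        pose proof (N_rep H H0 H1 beta lam nu b [] (S M) R Hnu) as E. rewrite app_nil_r in E.
        assert (Ncyl nu [b] <= 1).
        { rewrite <- (N_nil nu P). rewrite (N_split nu [] b P). simpl. pose proof (N_nonneg nu [negb b] P). lra. }
        assert (Ncyl nu (repeat b (S (S M))) <= / lam ^ S M).
        { assert (0 < lam ^ S M) by (apply pow_lt; lra).
          apply Rmult_le_reg_r with (r := lam ^ S M); auto. rewrite E, Rinv_l by lra. auto. }
        specialize (Pps xm). unfold Ncyl in *. unfold Rdiv. apply Rmult_le_compat_l; lra. }
  assert (Inf : infinite_sum (fun k => c * (A h beta lam k / lam ^ k)) (Q O)).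
  { apply (infsum_from_partial _ _ (fun M => Q (S M))).
    - intros M. rewrite (Part M). f_equal. apply sum_eq. intros i _. apply Hs.
    - intros e He. destruct (pow_inv_small lam Hl (e / (Ps xm + 1))) as [N HN].
      { apply Rdiv_lt_0_compat; auto. specialize (Pps xm); lra. }
      exists N. intros n Hn. destruct (Tail n) as [T1 T2]. rewrite Rabs_right by lra.
      specialize (HN (S n) ltac:(lia)). specialize (Pps xm).
      assert (0 < / lam ^ S n) by (apply Rinv_0_lt_compat, pow_lt; lra).
      apply Rmult_lt_compat_l with (r := Ps xm + 1) in HN; [|lra].
      replace ((Ps xm + 1) * (e / (Ps xm + 1))) with e in HN by (field; lra).
      unfold Rdiv in T2. nra. }
  pose proof (infsum_scal _ _ (/ c) Inf) as Inf2.
  assert (Inf3 : infinite_sum (fun k => A h beta lam k / lam ^ k) (/ c * Q O)).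
  { eapply infsum_ext; [|exact Inf2]. intros n. simpl. field; repeat split; try apply pow_nonzero; lra. }
  pose proof (Ftb_tails h beta lam _ Hh ltac:(lra) Hl Inf3) as E.
  split.
  - unfold Q in E. simpl repeat in E. fold Ps. rewrite E. fold c. field. lra.
  - rewrite E. pose proof (infsum_ge _ _ O Inf3) as G. simpl in G.
    eapply Rlt_le_trans; [|apply G].
    + unfold Rdiv. rewrite Rinv_1, Rmult_1_r. apply A_pos; auto; lra.
    + intros n. left. apply Rdiv_lt_0_compat; [apply A_pos; auto; lra| apply pow_lt; lra].
Qed.

Lemma mu_ratio H H0 H1 Hinf0 Hinf1 beta lam nu Phi : reduced_double_well H H0 H1 -> Un_cv H0 Hinf0 -> Un_cv H1 Hinf1 ->
  0 < beta -> is_eigenmeasure H beta lam nu -> is_eigenfunction H beta lam Phi ->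
  mu_cyl Phi nu false / mu_cyl Phi nu true =
    Fs H0 H1 beta lam false ^ 2 * Ftb H1 beta lam / Ftb H0 beta lam /\
  0 < Ftb H0 beta lam /\ 0 < Ftb H1 beta lam.
Proof.
  intros R C0 C1 Hb Hnu [Cf [Pf [Ef _]]]. pose proof Hnu as [P _]. pose proof R as [Hc _].
  set (Ps := Psi H0 H1 Hinf0 Hinf1 beta lam).
  destruct (eig_unique H beta lam Phi Ps Hc Cf) as [t [Ht Et]]; auto.
  - apply (Psi_cont H _ _ _ _ beta lam nu); auto.
  - apply (Psi_pos H _ _ _ _ beta lam nu); auto.
  - apply (Psi_eig H _ _ _ _ beta lam nu); auto.
  - assert (Vb : forall b, nu (fun x => Phi x * Defs.ind b x) = t * nu (fun x => Ps x * cyl [b] x)).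
    { intros b. rewrite <- nu_scal; auto.
      - apply nu_ext. intros x. rewrite Et, ind_cyl. ring.
      - apply contS_mult; [apply (Psi_cont H _ _ _ _ beta lam nu); auto| apply contS_cyl]. }
    destruct (nuPsi_cyl H H0 H1 Hinf0 Hinf1 beta lam nu false R C0 C1 Hb Hnu) as [V0 F1p].
    destruct (nuPsi_cyl H H0 H1 Hinf0 Hinf1 beta lam nu true R C0 C1 Hb Hnu) as [V1 F0p].
    simpl in V0, V1, F1p, F0p.
    pose proof (Fs_val H H0 H1 beta lam nu false R Hb Hnu) as Fv. simpl in Fv.
    pose proof (N_pos H H0 H1 beta lam nu false R Hb Hnu) as N0. pose proof (N_pos H H0 H1 beta lam nu true R Hb Hnu) as N1.
    simpl in N0, N1.
    pose proof (F_pos H H0 H1 beta lam nu false R Hb Hnu) as Fp.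
    assert (Pos : 0 < nu Phi).
    { apply Rlt_le_trans with (nu (fun x => Phi x * Defs.ind true x)).
      - rewrite Vb. unfold Ps. rewrite V1. simpl. apply Rmult_lt_0_compat; auto. apply Rmult_lt_0_compat; [|auto]. lra.
      - apply nu_mono; auto. apply contS_mult; auto. rewrite ind_cyl; apply contS_cyl.
        intros x. specialize (Pf x). unfold Defs.ind. destruct (Bool.eqb (x O) true); lra. }
    unfold mu_cyl. rewrite !Vb. unfold Ps. rewrite V0, V1. simpl. split; [|split; auto].
    rewrite Fv. field. repeat split; lra.
Qed.

Lemma limit_bound (s : nat -> R) L k w : Un_cv s L -> (forall n, Rabs (s k - s (k + n)%nat) <= w) -> Rabs (s k - L) <= w.
Proof.
  intros C Hw. apply Rnot_lt_le. intros Hl.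
  destruct (C (Rabs (s k - L) - w)) as [N HN]; [lra|].
  specialize (HN (k + N)%nat ltac:(lia)). specialize (Hw N). unfold R_dist in HN.
  assert (Rabs (s k - L) <= Rabs (s k - s (k + N)%nat) + Rabs (s (k + N)%nat - L)).
  { replace (s k - L) with ((s k - s (k + N)%nat) + (s (k + N)%nat - L)) by ring. apply Rabs_triang. }
  lra.
Qed.

Lemma gap_lemma (s : nat -> R) L a (P : nat -> Prop) : Un_cv s L -> (forall k, (1 <= k)%nat -> P k -> a < s k) -> a < L ->
  exists eta, 0 < eta /\ (forall k, (1 <= k)%nat -> P k -> a + eta <= s k) /\ a + eta <= L.
Proof.
  intros C Hs HL.
  destruct (C ((L - a) / 2)) as [N HN]; [lra|].
  assert (Fin : forall M, exists eta, 0 < eta /\ forall k, (1 <= k)%nat -> (k < M)%nat -> P k -> a + eta <= s k).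
  { induction M.
    - exists 1. split; [lra|]. intros; lia.
    - destruct IHM as [e [He HM]].
      destruct (classic ((1 <= M)%nat /\ P M)) as [[H1 H2]|Hn].
      + exists (Rmin e (s M - a)). split. apply Rmin_pos; auto. specialize (Hs M H1 H2). lra.
        intros k Hk1 Hk2 Hp. destruct (Nat.eq_dec k M) as [->|D].
        * pose proof (Rmin_r e (s M - a)). lra.
        * pose proof (Rmin_l e (s M - a)). specialize (HM k Hk1 ltac:(lia) Hp). lra.
      + exists e. split; auto. intros k Hk1 Hk2 Hp. destruct (Nat.eq_dec k M) as [->|D].
        * exfalso; apply Hn; auto.
        * apply HM; auto; lia. }
  destruct (Fin N) as [e [He HF]].
  exists (Rmin e ((L - a) / 2)). split; [apply Rmin_pos; lra|]. split.
  - intros k Hk Hp. destruct (Compare_dec.lt_dec k N) as [L1|L1].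
    + pose proof (Rmin_l e ((L - a) / 2)). specialize (HF k Hk L1 Hp). lra.
    + specialize (HN k ltac:(lia)). unfold R_dist in HN. apply Rabs_def2 in HN.
      pose proof (Rmin_r e ((L - a) / 2)). lra.
  - pose proof (Rmin_r e ((L - a) / 2)). lra.
Qed.

Lemma limit_nonneg (s : nat -> R) L : Un_cv s L -> (forall k, (1 <= k)%nat -> 0 <= s k) -> 0 <= L.
Proof.
  intros C Hs. apply Rnot_lt_le; intros HL. destruct (C (- L)) as [N HN]; [lra|].
  specialize (HN (S N) ltac:(lia)). specialize (Hs (S N) ltac:(lia)). unfold R_dist in HN.
  apply Rabs_def2 in HN. lra.
Qed.

Lemma list_maxK (l : list nat) : exists K, forall k, In k l -> (k <= K)%nat.
Proof.
  induction l as [|a l [K HK]]. exists O; intros k [].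
  exists (max a K). intros k [->|Hk]. lia. specialize (HK k Hk). lia.
Qed.

Definition indl (l : list nat) (k : nat) (c : R) : R := if in_dec Nat.eq_dec k l then c else 0.

Lemma sum0 (f : nat -> R) : sum_f_R0 f 0 = f O.
Proof. reflexivity. Qed.

Lemma zero_series : is_series (fun _ : nat => 0) 0.
Proof.
  apply is_series_Reals. intros e He. exists O. intros n _. unfold R_dist.
  assert (sum_f_R0 (fun _ => 0) n = 0) by (induction n; simpl; [auto| rewrite IHn; ring]).
  rewrite H, Rminus_diag, Rabs_R0; auto.
Qed.

Lemma single_series a c : (1 <= a)%nat -> is_series (fun k => if Nat.eq_dec (S k) a then c else 0) c.
Proof.
  intros Ha. apply is_series_Reals.
  assert (P : forall n, sum_f_R0 (fun k => if Nat.eq_dec (S k) a then c else 0) n = if Compare_dec.lt_dec n (a - 1) then 0 else c).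
  { induction n.
    - rewrite sum0. destruct (Nat.eq_dec 1 a); destruct (Compare_dec.lt_dec 0 (a - 1)); first [reflexivity | (exfalso; lia)].
    - rewrite tech5, IHn. destruct (Nat.eq_dec (S (S n)) a); destruct (Compare_dec.lt_dec n (a-1));
      destruct (Compare_dec.lt_dec (S n) (a - 1)); first [ring | (exfalso; lia)]. }
  intros e He. exists (a - 1)%nat. intros n Hn. unfold R_dist. rewrite P.
  destruct (Compare_dec.lt_dec n (a - 1)); [lia|]. rewrite Rminus_diag, Rabs_R0; auto.
Qed.

Lemma indl_series (l : list nat) c : NoDup l -> (forall k, In k l -> (1 <= k)%nat) ->
  is_series (fun k => indl l (S k) c) (INR (length l) * c).
Proof.
  induction l as [|a l IH]; intros Nd Hp.
  - simpl. rewrite Rmult_0_l. eapply is_series_ext'; [|apply zero_series]. intros n; unfold indl; simpl; auto.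
  - inversion Nd; subst.
    pose proof (is_series_plus _ _ _ _ (single_series a c (Hp a (or_introl eq_refl))) (IH H2 (fun k Hk => Hp k (or_intror Hk)))) as Q.
    eapply is_series_ext'; [|replace (INR (length (a :: l)) * c) with (plus c (INR (length l) * c)); [exact Q|]].
    + intros k. cbv beta. unfold indl.
      destruct (in_dec Nat.eq_dec (S k) (a :: l)) as [I|I]; destruct (in_dec Nat.eq_dec (S k) l) as [J|J];
      destruct (Nat.eq_dec (S k) a) as [E|E]; simpl in I; unfold plus; simpl; try ring.
      all: try (exfalso; subst; simpl in *; tauto). all: try (exfalso; destruct I as [I|I]; [congruence| tauto]).
    + cbn [length]. rewrite S_INR. unfold plus; simpl; ring.
Qed.

Lemma bern_q q K : 0 <= q <= 1 -> 1 - INR K * (1 - q) <= q ^ K.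
Proof.
  intros Hq. induction K. simpl; lra.
  rewrite S_INR. simpl. pose proof (pos_INR K). assert (0 <= q ^ K) by (apply pow_le; lra).
  assert (q * (1 - INR K * (1 - q)) <= q * q ^ K) by (apply Rmult_le_compat_l; lra).
  assert (0 <= INR K * ((1 - q) * (1 - q))) by (apply Rmult_le_pos; nra). nra.
Qed.

Lemma nlam_bound lam n : 1 < lam -> INR n * / lam ^ n <= / (lam - 1).
Proof.
  intros Hl. pose proof (pow_binom (lam - 1) n ltac:(lra)) as B. replace (1 + (lam - 1)) with lam in B by ring.
  assert (C : 0 <= INR n * (INR n - 1) / 2 * (lam - 1) ^ 2).
  { apply Rmult_le_pos; [|apply pow_le; lra]. destruct n. simpl; lra. rewrite S_INR. pose proof (pos_INR n). nra. }
  assert (0 < lam ^ n) by (apply pow_lt; lra).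
  apply Rmult_le_reg_r with (lam ^ n); auto. rewrite Rmult_assoc, Rinv_l, Rmult_1_r by lra.
  apply Rmult_le_reg_l with (lam - 1); [lra|]. rewrite <- Rmult_assoc, Rinv_r, Rmult_1_l by lra.
  pose proof (pos_INR n). nra.
Qed.

Lemma wgeom lam : 1 < lam -> is_series (fun k => INR (S k) * / lam ^ S k) (lam / (lam - 1) ^ 2).
Proof.
  intros Hl. apply is_series_Reals.
  assert (Hh : hpos (fun _ => 0)) by (intros k _; lra).
  eapply infsum_ext; [|apply (Ftb_tails_inf (fun _ => 0) 0 lam (lam / (lam - 1) ^ 2) Hh (Rle_refl 0) Hl)].
  - intros n. replace (- 0 * 0) with 0 by ring. rewrite exp_0. ring.
  - assert (Av : forall n, A (fun _ => 0) 0 lam n = / (lam - 1)).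
    { intros n. unfold A. rewrite <- (is_series_unique _ _ (geom_shift lam Hl)). apply Series_ext.
      intros j. unfold Aa. replace (- 0 * 0) with 0 by ring. rewrite exp_0. ring. }
    assert (Hq : Rabs (/ lam) < 1) by (rewrite Rabs_right; [apply inv_lt1; lra| left; apply Rinv_0_lt_compat; lra]).
    pose proof (is_series_scal (/ (lam - 1)) _ _ (is_series_geom _ Hq)) as G.
    apply is_series_Reals in G.
    eapply infsum_ext; [|replace (lam / (lam - 1) ^ 2) with (scal (/ (lam - 1)) (/ (1 - / lam))); [exact G|]].
    + intros n. rewrite Av. unfold scal; simpl; unfold mult; simpl. rewrite pow_inv. unfold Rdiv. ring.
    + unfold scal; simpl; unfold mult; simpl. field. split; lra.
Qed.

Lemma is_series_scalR c (a : nat -> R) l : is_series a l -> is_series (fun n => c * a n) (c * l).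
Proof. intros H. exact (is_series_scal c a l H). Qed.

Lemma Fterm_ex h beta lam : hpos h -> 0 <= beta -> 1 < lam -> ex_series (fun k => / lam ^ S k * exp (- beta * h (S k))).
Proof. intros. apply (A_ex h beta lam 0); auto. Qed.

Lemma Ftterm_ex h beta lam : hpos h -> 0 <= beta -> 1 < lam -> ex_series (fun k => INR (S k) * / lam ^ S k * exp (- beta * h (S k))).
Proof.
  intros Hh Hb Hl. apply (ex_series_cmp _ (fun k => INR (S k) * / lam ^ S k)); [|eexists; apply wgeom; auto].
  intros k. assert (0 < / lam ^ S k) by (apply Rinv_0_lt_compat, pow_lt; lra).
  assert (exp (- beta * h (S k)) <= 1) by (rewrite <- exp_0; apply exp_le_mono; specialize (Hh (S k) ltac:(lia)); nra).
  pose proof (exp_pos (- beta * h (S k))). pose proof (pos_INR (S k)).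
  rewrite Rabs_right. rewrite <- (Rmult_1_r (INR (S k) * / lam ^ S k)) at 2. apply Rmult_le_compat_l; [|lra]. nra.
  apply Rle_ge. apply Rmult_le_pos; [nra| lra].
Qed.

Lemma Fb_decomp h L beta lam : hpos h -> 0 <= beta -> 1 < lam ->
  Fb h beta lam = exp (- beta * L) / (lam - 1) + Series (fun k => / lam ^ S k * (exp (- beta * h (S k)) - exp (- beta * L))).
Proof.
  intros Hh Hb Hl. unfold Fb. rewrite series_Series by (apply Fterm_ex; auto).
  pose proof (is_series_minus _ _ _ _ (Series_correct _ (Fterm_ex h beta lam Hh Hb Hl)) (is_series_scal_r (exp (- beta * L)) _ _ (geom_shift lam Hl))) as M.
  assert (M2 : is_series (fun k => / lam ^ S k * (exp (- beta * h (S k)) - exp (- beta * L))) (Series (fun k => / lam ^ S k * exp (- beta * h (S k))) - / (lam - 1) * exp (- beta * L))).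
  { eapply is_series_ext'; [|exact M]. intros k. unfold plus, opp, mult; simpl. unfold plus, opp, mult; simpl. ring. }
  rewrite (is_series_unique _ _ M2). unfold plus, opp, mult; simpl. unfold plus, opp, mult; simpl. unfold Rdiv. ring.
Qed.

Lemma Ftb_decomp h L beta lam : hpos h -> 0 <= beta -> 1 < lam ->
  Ftb h beta lam = exp (- beta * L) * lam / (lam - 1) ^ 2 + Series (fun k => INR (S k) * / lam ^ S k * (exp (- beta * h (S k)) - exp (- beta * L))).
Proof.
  intros Hh Hb Hl. unfold Ftb. rewrite series_Series by (apply Ftterm_ex; auto).
  pose proof (is_series_minus _ _ _ _ (Series_correct _ (Ftterm_ex h beta lam Hh Hb Hl)) (is_series_scal_r (exp (- beta * L)) _ _ (wgeom lam Hl))) as M.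
  assert (M2 : is_series (fun k => INR (S k) * / lam ^ S k * (exp (- beta * h (S k)) - exp (- beta * L))) (Series (fun k => INR (S k) * / lam ^ S k * exp (- beta * h (S k))) - lam / (lam - 1) ^ 2 * exp (- beta * L))).
  { eapply is_series_ext'; [|exact M]. intros k. unfold plus, opp, mult; simpl. unfold plus, opp, mult; simpl. ring. }
  rewrite (is_series_unique _ _ M2). unfold plus, opp, mult; simpl. unfold plus, opp, mult; simpl. unfold Rdiv. ring.
Qed.

Lemma FG_est h L w W m beta lam : hpos h -> 0 <= beta -> 1 < lam ->
  (forall k, (1 <= k)%nat -> m <= h k) -> m <= L -> (forall k, (1 <= k)%nat -> Rabs (h k - L) <= w k) ->
  infinite_sum (fun k => w (S k)) W ->
  Rabs (Fb h beta lam - exp (- beta * L) / (lam - 1)) <= beta * W * exp (- beta * m) /\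
  Rabs (Ftb h beta lam - exp (- beta * L) * lam / (lam - 1) ^ 2) <= beta * W * exp (- beta * m) / (lam - 1).
Proof.
  intros Hh Hb Hl Hm HmL Hw HW. apply is_series_Reals in HW.
  assert (Pt : forall k, Rabs (exp (- beta * h (S k)) - exp (- beta * L)) <= beta * w (S k) * exp (- beta * m)).
  { intros k. eapply Rle_trans; [apply expdiff; [auto| apply Hm; lia| auto]|].
    apply Rmult_le_compat_r; [left; apply exp_pos|]. apply Rmult_le_compat_l; auto. apply Hw; lia. }
  split.
  - rewrite (Fb_decomp h L) by auto. match goal with |- Rabs (?a + ?b - ?a) <= _ => replace (a + b - a) with b by ring end.
    apply (series_abs_bound _ (fun k => beta * exp (- beta * m) * w (S k))).
    + intros k. rewrite Rabs_mult. assert (0 < / lam ^ S k <= 1).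
      { split. apply Rinv_0_lt_compat, pow_lt; lra. rewrite <- Rinv_1. apply Rinv_le_contravar; [lra|]. apply pow_R1_Rle; lra. }
      rewrite Rabs_right by lra. specialize (Pt k). pose proof (Rabs_pos (exp (- beta * h (S k)) - exp (- beta * L))).
      apply Rle_trans with (1 * Rabs (exp (- beta * h (S k)) - exp (- beta * L))); [apply Rmult_le_compat_r; lra| lra].
    + replace (beta * W * exp (- beta * m)) with ((beta * exp (- beta * m)) * W) by ring.
      apply is_series_scalR. auto.
  - rewrite (Ftb_decomp h L) by auto. match goal with |- Rabs (?a + ?b - ?a) <= _ => replace (a + b - a) with b by ring end.
    apply (series_abs_bound _ (fun k => / (lam - 1) * (beta * exp (- beta * m)) * w (S k))).
    + intros k. rewrite Rabs_mult. pose proof (nlam_bound lam (S k) Hl).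
      assert (0 <= INR (S k) * / lam ^ S k) by (apply Rmult_le_pos; [apply pos_INR| left; apply Rinv_0_lt_compat, pow_lt; lra]).
      rewrite Rabs_right by lra. specialize (Pt k). pose proof (Rabs_pos (exp (- beta * h (S k)) - exp (- beta * L))).
      replace (/ (lam - 1) * (beta * exp (- beta * m)) * w (S k)) with (/ (lam - 1) * (beta * w (S k) * exp (- beta * m))) by ring.
      apply Rmult_le_compat; auto.
    + replace (beta * W * exp (- beta * m) / (lam - 1)) with ((/ (lam - 1) * (beta * exp (- beta * m))) * W) by (unfold Rdiv; ring).
      apply is_series_scalR. auto.
Qed.

Lemma indl_nonneg l k c : 0 <= c -> 0 <= indl l k c.
Proof. intros. unfold indl. destruct (in_dec _ _ _); lra. Qed.

Definition SlD (l : list nat) lam := Series (fun k => indl l (S k) (/ lam ^ S k)).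

Lemma F1_est h L w W m hc K l beta lam : hpos h -> 0 <= beta -> 1 < lam -> NoDup l ->
  (forall k, In k l -> (1 <= k)%nat /\ (k <= K)%nat /\ h k = hc) ->
  (forall k, (1 <= k)%nat -> ~ In k l -> m <= h k) -> m <= L -> hc <= L ->
  (forall k, (1 <= k)%nat -> Rabs (h k - L) <= w k) -> infinite_sum (fun k => w (S k)) W ->
  (exists Rr, Fb h beta lam = exp (- beta * L) / (lam - 1) + (exp (- beta * hc) - exp (- beta * L)) * SlD l lam + Rr /\
     Rabs Rr <= beta * W * exp (- beta * m) /\ 0 <= SlD l lam <= INR (length l) /\ INR (length l) * / lam ^ K <= SlD l lam) /\
  Rabs (Ftb h beta lam - exp (- beta * L) * lam / (lam - 1) ^ 2) <=
     beta * W * exp (- beta * m) / (lam - 1) + INR (length l) * (INR K * (2 * exp (- beta * hc))).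
Proof.
  intros Hh Hb Hl Nd Hlist Hm HmL HcL Hw HW. apply is_series_Reals in HW.
  assert (Hl1 : forall k, In k l -> (1 <= k)%nat) by (intros k Hk; apply Hlist; auto).
  assert (wpos : forall k, 0 <= w (S k)) by (intros k; eapply Rle_trans; [apply Rabs_pos| apply Hw; lia]).
  assert (Eh : exp (- beta * L) <= exp (- beta * hc)) by (apply exp_le_mono; nra).
  assert (Pt : forall k, ~ In (S k) l -> Rabs (exp (- beta * h (S k)) - exp (- beta * L)) <= beta * w (S k) * exp (- beta * m)).
  { intros k Hk. eapply Rle_trans; [apply expdiff; [auto| apply Hm; auto; lia| auto]|].
    apply Rmult_le_compat_r; [left; apply exp_pos|]. apply Rmult_le_compat_l; auto. apply Hw; lia. }
  assert (Qk : forall k, In (S k) l -> Rabs (exp (- beta * h (S k)) - exp (- beta * L)) <= 2 * exp (- beta * hc)).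
  { intros k Hk. destruct (Hlist _ Hk) as [_ [_ E]]. rewrite E.
    pose proof (exp_pos (- beta * L)). rewrite Rabs_right; lra. }
  assert (Lpk : forall k, 0 < / lam ^ S k <= 1).
  { intros k. split. apply Rinv_0_lt_compat, pow_lt; lra. rewrite <- Rinv_1. apply Rinv_le_contravar; [lra|]. apply pow_R1_Rle; lra. }
  split.
  - set (Sl := SlD l lam).
    set (r := fun k => if in_dec Nat.eq_dec (S k) l then 0 else / lam ^ S k * (exp (- beta * h (S k)) - exp (- beta * L))).
    assert (Exs : ex_series (fun k => indl l (S k) (/ lam ^ S k))).
    { apply (ex_series_cmp _ (fun k => indl l (S k) 1)); [|eexists; apply indl_series; auto].
      intros k. unfold indl. destruct (in_dec _ _ _); [|rewrite Rabs_R0; lra]. destruct (Lpk k). rewrite Rabs_right; lra. }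
    assert (Rb : forall k, Rabs (r k) <= beta * exp (- beta * m) * w (S k)).
    { intros k. unfold r. destruct (in_dec _ _ _) as [I|I].
      - rewrite Rabs_R0. apply Rmult_le_pos; auto. apply Rmult_le_pos; [auto| left; apply exp_pos].
      - rewrite Rabs_mult. destruct (Lpk k). rewrite Rabs_right by lra. specialize (Pt k I).
        pose proof (Rabs_pos (exp (- beta * h (S k)) - exp (- beta * L))).
        apply Rle_trans with (1 * Rabs (exp (- beta * h (S k)) - exp (- beta * L))); [apply Rmult_le_compat_r; lra| lra]. }
    assert (Exr : ex_series r).
    { apply (ex_series_cmp _ (fun k => beta * exp (- beta * m) * w (S k))); auto. eexists; apply is_series_scalR; eauto. }
    exists (Series r). split; [|split; [|split]].
    + unfold Fb. rewrite series_Series by (apply Fterm_ex; auto).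
      pose proof (is_series_plus _ _ _ _ (is_series_plus _ _ _ _ (is_series_scal_r (exp (- beta * L)) _ _ (geom_shift lam Hl))
                     (is_series_scalR (exp (- beta * hc) - exp (- beta * L)) _ _ (Series_correct _ Exs))) (Series_correct _ Exr)) as M.
      assert (M2 : is_series (fun k => / lam ^ S k * exp (- beta * h (S k))) (/ (lam - 1) * exp (- beta * L) + (exp (- beta * hc) - exp (- beta * L)) * Sl + Series r)).
      { eapply is_series_ext'; [|exact M].
        intros k. unfold plus, mult; simpl. unfold r, indl. destruct (in_dec _ _ _) as [I|I].
        -- destruct (Hlist _ I) as [_ [_ E]]. rewrite E. ring.
        -- change (lam ^ S k) with (lam * lam ^ k). ring. }
      rewrite (is_series_unique _ _ M2). unfold Rdiv. ring.
    + apply (series_abs_bound _ _ _ Rb). replace (beta * W * exp (- beta * m)) with ((beta * exp (- beta * m)) * W) by ring.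
      apply is_series_scalR. auto.
    + split.
      * apply Series_nonneg; auto. intros k. apply indl_nonneg. destruct (Lpk k); lra.
      * rewrite <- (Rmult_1_r (INR (length l))). rewrite <- (is_series_unique _ _ (indl_series l 1 Nd Hl1)).
        apply Series_le; [|eexists; apply indl_series; auto]. intros k. unfold indl. destruct (in_dec _ _ _); [destruct (Lpk k)|]; lra.
    + rewrite <- (is_series_unique _ _ (indl_series l (/ lam ^ K) Nd Hl1)).
      apply Series_le; auto. intros k. unfold indl. destruct (in_dec _ _ _) as [I|I]; [|lra].
      destruct (Hlist _ I) as [_ [HK _]]. split. left; apply Rinv_0_lt_compat, pow_lt; lra.
      apply Rinv_le_contravar. apply pow_lt; lra. apply Rle_pow; [lra| auto].
  - rewrite (Ftb_decomp h L) by auto. match goal with |- Rabs (?a + ?b - ?a) <= _ => replace (a + b - a) with b by ring end.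
    apply (series_abs_bound _ (fun k => / (lam - 1) * (beta * exp (- beta * m)) * w (S k) + indl l (S k) (INR K * (2 * exp (- beta * hc))))).
    + intros k. rewrite Rabs_mult. pose proof (nlam_bound lam (S k) Hl).
      assert (0 <= INR (S k) * / lam ^ S k) by (apply Rmult_le_pos; [apply pos_INR| left; apply Rinv_0_lt_compat, pow_lt; lra]).
      rewrite Rabs_right by lra.
      assert (0 <= / (lam - 1) * (beta * exp (- beta * m)) * w (S k)).
      { apply Rmult_le_pos; auto. apply Rmult_le_pos. left; apply Rinv_0_lt_compat; lra. apply Rmult_le_pos; [auto| left; apply exp_pos]. }
      unfold indl. destruct (in_dec _ _ _) as [I|I].
      * destruct (Hlist _ I) as [_ [HK _]]. specialize (Qk k I). destruct (Lpk k).
        assert (INR (S k) * / lam ^ S k <= INR K).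
        { apply Rle_trans with (INR (S k) * 1). apply Rmult_le_compat_l; [apply pos_INR| lra]. rewrite Rmult_1_r. apply le_INR; auto. }
        pose proof (Rabs_pos (exp (- beta * h (S k)) - exp (- beta * L))).
        assert (INR (S k) * / lam ^ S k * Rabs (exp (- beta * h (S k)) - exp (- beta * L)) <= INR K * (2 * exp (- beta * hc))) by (apply Rmult_le_compat; auto).
        lra.
      * specialize (Pt k I). pose proof (Rabs_pos (exp (- beta * h (S k)) - exp (- beta * L))).
        replace (/ (lam - 1) * (beta * exp (- beta * m)) * w (S k)) with (/ (lam - 1) * (beta * w (S k) * exp (- beta * m))) by ring.
        rewrite Rplus_0_r. apply Rmult_le_compat; auto.
    + apply (is_series_plus (fun k => / (lam - 1) * (beta * exp (- beta * m)) * w (S k)) (fun k => indl l (S k) (INR K * (2 * exp (- beta * hc))))).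
      * replace (beta * W * exp (- beta * m) / (lam - 1)) with ((/ (lam - 1) * (beta * exp (- beta * m))) * W) by (unfold Rdiv; ring).
        apply is_series_scalR. auto.
      * apply indl_series; auto.
Qed.

Definition gam (Hinf0 Hinf1 : R) := (Hinf0 + Hinf1) / 2.

Lemma exp_lin a b : exp a * exp b = exp (a + b).
Proof. rewrite exp_plus; auto. Qed.

Ltac expeq := repeat rewrite exp_lin; f_equal; unfold gam; field.

Definition Ev Hinf0 Hinf1 b := exp (- b * gam Hinf0 Hinf1).
Definition yv Hinf0 Hinf1 b lamb := Ev Hinf0 Hinf1 b / (lamb - 1).
Definition A0v Hinf0 Hinf1 b := exp (b * (gam Hinf0 Hinf1 - Hinf0)).
Definition d0v H0 Hinf0 Hinf1 b lamb := Fb H0 b lamb / A0v Hinf0 Hinf1 b - yv Hinf0 Hinf1 b lamb.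
Definition eps1v H1 Hinf0 Hinf1 l b lamb := Fb H1 b lamb * A0v Hinf0 Hinf1 b - yv Hinf0 Hinf1 b lamb - SlD l lamb.
Definition e0v H0 Hinf0 b lamb := Ftb H0 b lamb / (exp (- b * Hinf0) / (lamb - 1) ^ 2) - lamb.
Definition e1v H1 Hinf1 b lamb := Ftb H1 b lamb / (exp (- b * Hinf1) / (lamb - 1) ^ 2) - lamb.

Lemma perbeta H H0 H1 Hinf0 Hinf1 b lamb nu Phi (l : list nat) K w0 W0 w1 W1 eta0 eta1 :
  reduced_double_well H H0 H1 -> Un_cv H0 Hinf0 -> Un_cv H1 Hinf1 -> 0 < b ->
  is_eigenmeasure H b lamb nu -> is_eigenfunction H b lamb Phi ->
  Hinf0 <= Hinf1 -> 0 < gam Hinf0 Hinf1 -> NoDup l ->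
  (forall k, In k l -> (1 <= k)%nat /\ (k <= K)%nat /\ H1 k = gam Hinf0 Hinf1 - Hinf0) ->
  (forall k, (1 <= k)%nat -> Rabs (H0 k - Hinf0) <= w0 k) -> infinite_sum (fun k => w0 (S k)) W0 ->
  (forall k, (1 <= k)%nat -> Rabs (H1 k - Hinf1) <= w1 k) -> infinite_sum (fun k => w1 (S k)) W1 ->
  0 < eta0 -> (forall k, (1 <= k)%nat -> Hinf0 - gam Hinf0 Hinf1 + eta0 <= H0 k) -> Hinf0 - gam Hinf0 Hinf1 + eta0 <= Hinf0 ->
  0 < eta1 -> (forall k, (1 <= k)%nat -> ~ In k l -> gam Hinf0 Hinf1 - Hinf0 + eta1 <= H1 k) -> gam Hinf0 Hinf1 - Hinf0 + eta1 <= Hinf1 ->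
  let y := yv Hinf0 Hinf1 b lamb in
  let d0 := d0v H0 Hinf0 Hinf1 b lamb in
  let Sv := SlD l lamb in
  let e1 := eps1v H1 Hinf0 Hinf1 l b lamb in
  let E := Ev Hinf0 Hinf1 b in
  let kap := INR (length l) in
  1 < lamb /\ 0 < y /\ (y + d0) * (y + Sv + e1) = 1 /\ 0 < y + d0 /\ 0 < y + Sv + e1 /\
  Rabs d0 <= b * W0 * exp (- b * eta0) /\ 0 <= Sv <= kap /\ kap * / lamb ^ K <= Sv /\
  Rabs e1 <= b * W1 * exp (- b * eta1) + kap * E /\
  Rabs (e0v H0 Hinf0 b lamb) <= b * W0 * exp (- b * eta0) / y /\
  Rabs (e1v H1 Hinf1 b lamb) <= b * W1 * exp (- b * eta1) / y + 2 * kap * INR K * E / y ^ 2 /\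
  Fb H1 b lamb = / (A0v Hinf0 Hinf1 b * (y + d0)) /\
  mu_cyl Phi nu false / mu_cyl Phi nu true = (y + d0) ^ 2 * (lamb + e1v H1 Hinf1 b lamb) / (lamb + e0v H0 Hinf0 b lamb).
Proof.
  intros R C0 C1 Hb Hnu Hphi Hle Hg Nd Hl Hw0 HW0 Hw1 HW1 He0 Hm0 Hm0' He1 Hm1 Hm1' y d0 Sv e1 E kap.
  pose proof (lam_gt1 _ _ _ _ _ _ R Hb Hnu) as Hlam.
  set (u := lamb - 1). assert (Hu : 0 < u) by (unfold u; lra).
  set (A0 := A0v Hinf0 Hinf1 b). assert (HA : 0 < A0) by apply exp_pos.
  assert (HE : 0 < E) by apply exp_pos.
  assert (Hy : y = E / u) by reflexivity.
  assert (Hyp : 0 < y) by (rewrite Hy; apply Rdiv_lt_0_compat; auto).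
  assert (I1 : exp (- b * Hinf0) = A0 * E) by (unfold A0, A0v, E, Ev; expeq).
  assert (I2 : exp (- b * Hinf1) * A0 = E) by (unfold A0, A0v, E, Ev; expeq).
  set (B0 := exp (- b * (gam Hinf0 Hinf1 - Hinf0))).
  assert (I3 : B0 * A0 = 1) by (unfold B0, A0, A0v; rewrite exp_lin; rewrite <- exp_0; f_equal; ring).
  assert (I4 : exp (- b * (Hinf0 - gam Hinf0 Hinf1 + eta0)) = A0 * exp (- b * eta0)) by (unfold A0, A0v; expeq).
  assert (I5 : exp (- b * (gam Hinf0 Hinf1 - Hinf0 + eta1)) = B0 * exp (- b * eta1)) by (unfold B0; expeq).
  assert (hp0 : hpos H0) by apply (hpos_lev H H0 H1 false R).
  assert (hp1 : hpos H1) by apply (hpos_lev H H0 H1 true R).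
  destruct (FG_est H0 Hinf0 w0 W0 (Hinf0 - gam Hinf0 Hinf1 + eta0) b lamb hp0 ltac:(lra) Hlam Hm0 Hm0' Hw0 HW0) as [F0e T0e].
  destruct (F1_est H1 Hinf1 w1 W1 (gam Hinf0 Hinf1 - Hinf0 + eta1) (gam Hinf0 Hinf1 - Hinf0) K l b lamb hp1 ltac:(lra) Hlam Nd Hl Hm1 Hm1' ltac:(lra) Hw1 HW1) as [[Rr [F1d [Rb [Sb1 Sb2]]]] T1e].
  pose proof (F_prod H H0 H1 b lamb nu R Hb Hnu) as Fp. unfold Fs in Fp. simpl in Fp.
  pose proof (F_pos H H0 H1 b lamb nu false R Hb Hnu) as F0p. unfold Fs in F0p. simpl in F0p.
  pose proof (F_pos H H0 H1 b lamb nu true R Hb Hnu) as F1p. unfold Fs in F1p. simpl in F1p.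
  assert (D0 : Fb H0 b lamb = A0 * (y + d0)) by (unfold d0, d0v; fold A0; fold y; field; lra).
  assert (EE1 : Fb H1 b lamb * A0 = y + Sv + e1) by (unfold e1, eps1v; fold A0 y Sv; ring).
  fold u in F0e, T0e, T1e, F1d.
  assert (Lp : 0 < exp (- b * eta0)) by apply exp_pos.
  assert (Lp1 : 0 < exp (- b * eta1)) by apply exp_pos.
  repeat split; auto.
  - rewrite <- EE1. replace (y + d0) with (Fb H0 b lamb / A0) by (rewrite D0; field; lra).
    replace (Fb H0 b lamb / A0 * (Fb H1 b lamb * A0)) with (Fb H0 b lamb * Fb H1 b lamb) by (field; lra). auto.
  - replace (y + d0) with (Fb H0 b lamb / A0) by (rewrite D0; field; lra). apply Rdiv_lt_0_compat; auto.
  - rewrite <- EE1. apply Rmult_lt_0_compat; auto.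
  -
    replace d0 with ((Fb H0 b lamb - exp (- b * Hinf0) / u) / A0) by (unfold d0, d0v; fold A0 y; rewrite Hy, I1; field; lra).
    unfold Rdiv at 1. rewrite Rabs_mult, Rabs_inv, (Rabs_right A0) by lra.
    rewrite I4 in F0e. apply Rmult_le_reg_r with A0; auto. rewrite Rmult_assoc, Rinv_l, Rmult_1_r by lra.
    replace (b * W0 * exp (- b * eta0) * A0) with (b * W0 * (A0 * exp (- b * eta0))) by ring. auto.
  - unfold Sv, kap. lra.
  - unfold Sv, kap. lra.
  -
    assert (Ee1 : e1 = Rr * A0 - E * Sv).
    { unfold e1, eps1v, Sv. fold A0 y. rewrite F1d. rewrite Hy.
      replace (exp (- b * Hinf1)) with (E / A0) by (rewrite <- I2; field; lra).
      replace (exp (- b * (gam Hinf0 Hinf1 - Hinf0))) with (/ A0) by (apply (Rmult_eq_reg_r A0); [fold B0; rewrite I3, Rinv_l; lra| lra]).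
      field. split; lra. }
    rewrite Ee1. eapply Rle_trans; [apply Rabs_triang|]. rewrite Rabs_Ropp, Rabs_mult, Rabs_mult, (Rabs_right A0), (Rabs_right E), (Rabs_right Sv) by (unfold Sv; lra).
    rewrite I5 in Rb.
    assert (Rabs Rr * A0 <= b * W1 * exp (- b * eta1)).
    { apply Rmult_le_reg_r with B0. unfold B0; apply exp_pos. rewrite Rmult_assoc, (Rmult_comm A0), I3, Rmult_1_r.
      replace (b * W1 * exp (- b * eta1) * B0) with (b * W1 * (B0 * exp (- b * eta1))) by ring. auto. }
    assert (E * Sv <= kap * E) by (unfold Sv in *; unfold kap; nra).
    lra.
  -
    unfold e0v. fold u.
    assert (Ex0 : 0 < exp (- b * Hinf0)) by apply exp_pos.
    replace (Ftb H0 b lamb / (exp (- b * Hinf0) / u ^ 2) - lamb) with ((Ftb H0 b lamb - exp (- b * Hinf0) * lamb / u ^ 2) * (u ^ 2 / exp (- b * Hinf0))) by (field; lra).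
    rewrite Rabs_mult, (Rabs_right (u ^ 2 / exp (- b * Hinf0))) by (apply Rle_ge; apply Rdiv_le_0_compat; [nra| lra]).
    rewrite I4 in T0e.
    apply Rle_trans with (b * W0 * (A0 * exp (- b * eta0)) / u * (u ^ 2 / exp (- b * Hinf0))).
    + apply Rmult_le_compat_r; auto. apply Rdiv_le_0_compat; [nra| lra].
    + rewrite I1, Hy. right. field. repeat split; lra.
  -
    unfold e1v. fold u.
    assert (Ex1 : 0 < exp (- b * Hinf1)) by apply exp_pos.
    replace (Ftb H1 b lamb / (exp (- b * Hinf1) / u ^ 2) - lamb) with ((Ftb H1 b lamb - exp (- b * Hinf1) * lamb / u ^ 2) * (u ^ 2 / exp (- b * Hinf1))) by (field; lra).
    rewrite Rabs_mult, (Rabs_right (u ^ 2 / exp (- b * Hinf1))) by (apply Rle_ge; apply Rdiv_le_0_compat; [nra| lra]).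
    rewrite I5 in T1e. fold B0 in T1e.
    eapply Rle_trans; [apply Rmult_le_compat_r; [apply Rdiv_le_0_compat; [nra| lra]| exact T1e]|].
    replace (exp (- b * Hinf1)) with (E / A0) by (rewrite <- I2; field; lra).
    replace B0 with (/ A0) by (apply (Rmult_eq_reg_r A0); [rewrite I3, Rinv_l; lra| lra]).
    rewrite Hy. fold kap. right. field. repeat split; lra.
  - replace (y + d0) with (Fb H0 b lamb / A0) by (rewrite D0; field; lra). replace (A0 * (Fb H0 b lamb / A0)) with (Fb H0 b lamb) by (field; lra). apply (Rmult_eq_reg_l (Fb H0 b lamb)); [rewrite Fp, Rinv_r; lra| lra].
  - destruct (mu_ratio H H0 H1 Hinf0 Hinf1 b lamb nu Phi R C0 C1 Hb Hnu Hphi) as [M [T0p T1p]].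
    rewrite M. unfold Fs. simpl. unfold e0v, e1v. fold u.
    replace (y + d0) with (Fb H0 b lamb / A0) by (rewrite D0; field; lra).
    assert (Ex0 : 0 < exp (- b * Hinf0)) by apply exp_pos.
    assert (Ex1 : 0 < exp (- b * Hinf1)) by apply exp_pos.
    replace (exp (- b * Hinf1)) with (E / A0) by (rewrite <- I2; field; lra).
    rewrite I1. field. repeat split; try lra. replace (lamb * (A0 * E) + (Ftb H0 b lamb * u ^ 2 - lamb * (A0 * E))) with (Ftb H0 b lamb * u ^ 2) by ring. apply Rgt_not_eq. apply Rmult_gt_0_compat; [auto| apply pow_lt; lra].
Qed.

Definition ev (P : R -> Prop) := exists B, forall b, B <= b -> P b.
Definition tends (f : R -> R) (l : R) := forall e, 0 < e -> ev (fun b => Rabs (f b - l) < e).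

Lemma ev_and P Q : ev P -> ev Q -> ev (fun b => P b /\ Q b).
Proof.
  intros [B1 H1] [B2 H2]. exists (Rmax B1 B2). intros b Hb.
  split; [apply H1| apply H2]; eapply Rle_trans; eauto; [apply Rmax_l| apply Rmax_r].
Qed.

Lemma ev_mono (P Q : R -> Prop) : ev P -> (forall b, P b -> Q b) -> ev Q.
Proof. intros [B HB] HPQ. exists B. auto. Qed.

Lemma ev_ge c : ev (fun b => c <= b).
Proof. exists c. auto. Qed.

Lemma tends_const c : tends (fun _ => c) c.
Proof. intros e He. exists 0. intros. rewrite Rminus_diag, Rabs_R0; auto. Qed.

Lemma tends_ext f g l : ev (fun b => f b = g b) -> tends f l -> tends g l.
Proof.
  intros Hev Hf e He. apply (ev_mono _ _ (ev_and _ _ Hev (Hf e He))). intros b [E1 E2]. rewrite <- E1; auto.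
Qed.

Lemma tends_squeeze f g : ev (fun b => Rabs (f b) <= g b) -> tends g 0 -> tends f 0.
Proof.
  intros Hev Hg e He. apply (ev_mono _ _ (ev_and _ _ Hev (Hg e He))). intros b [E1 E2].
  rewrite Rminus_0_r in *. apply Rabs_def2 in E2. lra.
Qed.

Lemma tends_plus f g a c : tends f a -> tends g c -> tends (fun b => f b + g b) (a + c).
Proof.
  intros Hf Hg e He. apply (ev_mono _ _ (ev_and _ _ (Hf (e/2) ltac:(lra)) (Hg (e/2) ltac:(lra)))).
  intros b [E1 E2]. replace (f b + g b - (a + c)) with ((f b - a) + (g b - c)) by ring.
  eapply Rle_lt_trans; [apply Rabs_triang| lra].
Qed.

Lemma tends_mult f g a c : tends f a -> tends g c -> tends (fun b => f b * g b) (a * c).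
Proof.
  intros Hf Hg e He. set (M := Rabs a + Rabs c + 1).
  assert (HM : 0 < M) by (unfold M; pose proof (Rabs_pos a); pose proof (Rabs_pos c); lra).
  set (d := Rmin 1 (e / (2 * M))).
  assert (Hd : 0 < d) by (unfold d; apply Rmin_pos; [lra| apply Rdiv_lt_0_compat; lra]).
  assert (d1 : d <= 1) by apply Rmin_l.
  assert (d2 : d * M <= e / 2).
  { assert (d <= e / (2 * M)) by apply Rmin_r. apply Rmult_le_compat_r with (r := M) in H; [|lra].
    replace (e / (2 * M) * M) with (e / 2) in H by (field; lra). lra. }
  apply (ev_mono _ _ (ev_and _ _ (Hf d Hd) (Hg d Hd))). intros b [E1 E2].
  replace (f b * g b - a * c) with ((f b - a) * (g b - c) + (f b - a) * c + a * (g b - c)) by ring.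
  eapply Rle_lt_trans. { eapply Rle_trans; [apply Rabs_triang|]. apply Rplus_le_compat_r. apply Rabs_triang. }
  rewrite !Rabs_mult.
  pose proof (Rabs_pos (f b - a)). pose proof (Rabs_pos (g b - c)). pose proof (Rabs_pos a). pose proof (Rabs_pos c).
  assert (Rabs (f b - a) * Rabs (g b - c) <= d * d) by (apply Rmult_le_compat; lra).
  assert (Rabs (f b - a) * Rabs c <= d * Rabs c) by (apply Rmult_le_compat_r; lra).
  assert (Rabs a * Rabs (g b - c) <= Rabs a * d) by (apply Rmult_le_compat_l; lra).
  assert (d * d <= d * 1) by (apply Rmult_le_compat_l; lra).
  unfold M in d2. nra.
Qed.

Lemma tends_inv f a : tends f a -> a <> 0 -> tends (fun b => / f b) (/ a).
Proof.
  intros Hf Ha e He. assert (Pa : 0 < Rabs a) by (apply Rabs_pos_lt; auto).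
  set (d := Rmin (Rabs a / 2) (e * (Rabs a * Rabs a) / 2)).
  assert (Hd : 0 < d) by (unfold d; apply Rmin_pos; [lra| apply Rdiv_lt_0_compat; [apply Rmult_lt_0_compat; nra| lra]]).
  apply (ev_mono _ _ (Hf d Hd)). intros b E.
  assert (d1 : d <= Rabs a / 2) by apply Rmin_l.
  assert (d2 : d <= e * (Rabs a * Rabs a) / 2) by apply Rmin_r.
  assert (Fb : Rabs a / 2 <= Rabs (f b)).
  { pose proof (Rabs_triang_inv a (a - f b)). replace (a - (a - f b)) with (f b) in H by ring.
    rewrite Rabs_minus_sym in H. lra. }
  assert (fn : f b <> 0) by (intro Z; rewrite Z, Rabs_R0 in Fb; lra).
  replace (/ f b - / a) with ((a - f b) * / (f b * a)) by (field; auto).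
  rewrite Rabs_mult, Rabs_minus_sym, Rabs_inv, Rabs_mult.
  assert (0 < Rabs (f b) * Rabs a) by (apply Rmult_lt_0_compat; lra).
  apply Rmult_lt_reg_r with (Rabs (f b) * Rabs a); auto.
  rewrite Rmult_assoc, Rinv_l, Rmult_1_r by lra.
  assert (Rabs a / 2 * Rabs a <= Rabs (f b) * Rabs a) by (apply Rmult_le_compat_r; lra).
  nra.
Qed.

Lemma tends_exp_decay eta : 0 < eta -> tends (fun b => exp (- b * eta)) 0.
Proof.
  intros He e Hee. exists (/ (eta * e)). intros b Hb.
  assert (0 < / (eta * e)) by (apply Rinv_0_lt_compat; nra).
  assert (Hbp : 0 < b) by lra.
  rewrite Rminus_0_r, Rabs_right by (left; apply exp_pos).
  pose proof (exp_ineq1_le (b * eta)).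
  assert (E : exp (- b * eta) * exp (b * eta) = 1) by (rewrite <- exp_plus; replace (- b * eta + b * eta) with 0 by ring; apply exp_0).
  assert (b * eta * e >= 1).
  { apply Rmult_le_compat_r with (r := eta * e) in Hb; [|nra]. rewrite Rinv_l in Hb by nra. nra. }
  pose proof (exp_pos (- b * eta)).
  assert (A1 : exp (- b * eta) * (b * eta) < 1) by (rewrite <- E; apply Rmult_lt_compat_l; [auto| lra]).
  assert (A2 : exp (- b * eta) <= exp (- b * eta) * (b * eta * e)) by (rewrite <- (Rmult_1_r (exp (- b * eta))) at 1; apply Rmult_le_compat_l; lra).
  assert (A3 : exp (- b * eta) * (b * eta * e) < e) by (replace (exp (- b * eta) * (b * eta * e)) with (exp (- b * eta) * (b * eta) * e) by ring; rewrite <- (Rmult_1_l e) at 2; apply Rmult_lt_compat_r; auto).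
  lra.
Qed.

Lemma tends_b_exp_decay eta : 0 < eta -> tends (fun b => b * exp (- b * eta)) 0.
Proof.
  intros He e Hee. exists (1 + 4 / (eta * eta * e)). intros b Hb.
  assert (P4 : 0 < 4 / (eta * eta * e)) by (apply Rdiv_lt_0_compat; [lra| apply Rmult_lt_0_compat; nra]).
  assert (Hbp : 0 < b) by lra.
  rewrite Rminus_0_r, Rabs_right by (left; apply Rmult_lt_0_compat; [lra| apply exp_pos]).
  pose proof (exp_ineq1_le (b * eta / 2)).
  assert (E : exp (- b * eta) * (exp (b * eta / 2) * exp (b * eta / 2)) = 1).
  { rewrite <- !exp_plus. replace (- b * eta + (b * eta / 2 + b * eta / 2)) with 0 by field. apply exp_0. }
  set (z := exp (b * eta / 2)). fold z in H, E.
  assert (z * z >= b * eta / 2 * (b * eta / 2)) by (apply Rle_ge; apply Rmult_le_compat; nra).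
  assert (b * (eta * eta * e) > 4).
  { assert (b > 4 / (eta * eta * e)) by lra. apply Rmult_gt_compat_r with (r := eta * eta * e) in H1; [|apply Rmult_lt_0_compat; nra].
    replace (4 / (eta * eta * e) * (eta * eta * e)) with 4 in H1 by (field; split; lra). lra. }
  pose proof (exp_pos (- b * eta)).
  assert (b * exp (- b * eta) * (b * eta / 2 * (b * eta / 2)) <= b * exp (- b * eta) * (z * z)) by (apply Rmult_le_compat_l; nra).
  replace (b * exp (- b * eta) * (z * z)) with b in H3 by (rewrite Rmult_assoc, E; ring).
  assert (b * exp (- b * eta) * (b * (eta * eta)) <= 4) by nra.
  nra.
Qed.

Lemma Rabs_def2b a b : Rabs a <= b -> - b <= a <= b.
Proof. intros H. pose proof (Rle_abs a). pose proof (Rle_abs (- a)). rewrite Rabs_Ropp in H1. lra. Qed.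

Lemma ybounds kap y d0 S e1 dl : 0 <= kap -> 0 < y -> 0 <= S <= kap -> Rabs d0 <= dl -> Rabs e1 <= dl ->
  dl <= / (2 * kap + 4) -> (y + d0) * (y + S + e1) = 1 -> 0 < y + d0 -> 0 < y + S + e1 ->
  / (2 * kap + 4) <= y <= 1 + dl.
Proof.
  intros Hk Hy HS Hd He Hdl Eq P1 P2.
  apply Rabs_def2b in Hd. apply Rabs_def2b in He.
  set (a := / (2 * kap + 4)) in *.
  assert (Ha : 0 < a) by (unfold a; apply Rinv_0_lt_compat; lra).
  assert (Ha2 : a * (2 * kap + 4) = 1) by (unfold a; field; lra).
  split.
  - apply Rnot_lt_le. intros Hl.
    assert (Q1 : y + d0 < 2 * a) by lra.
    assert (Q2 : y + S + e1 < kap + 2 * a) by lra.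
    assert ((y + d0) * (y + S + e1) < 2 * a * (kap + 2 * a)).
    { apply Rmult_le_0_lt_compat; lra. }
    assert (2 * a * (kap + 2 * a) < 1).
    { assert (a <= 1/4) by nra. nra. }
    lra.
  - apply Rnot_lt_le. intros Hl.
    assert (Q1 : 1 < y + d0) by lra.
    assert (Q2 : 1 < y + S + e1) by lra.
    assert (1 * 1 < (y + d0) * (y + S + e1)) by (apply Rmult_le_0_lt_compat; lra).
    lra.
Qed.

Lemma pquad kap y d0 S e1 dl0 dl1 r : 0 <= kap -> 0 < y -> y <= 2 -> 0 <= S <= kap -> kap - r <= S ->
  Rabs d0 <= dl0 -> Rabs e1 <= dl1 -> dl1 <= 1 -> (y + d0) * (y + S + e1) = 1 ->
  Rabs (y * y + kap * y - 1) <= dl0 * (3 + kap) + 2 * (r + dl1).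
Proof.
  intros Hk Hy Hy2 HS HSr Hd He He1 Eq.
  replace (y * y + kap * y - 1) with (- (d0 * (y + S + e1) + y * (S - kap + e1))).
  2: { apply Rminus_diag_uniq. rewrite <- Eq. ring. }
  rewrite Rabs_Ropp. eapply Rle_trans; [apply Rabs_triang|]. rewrite !Rabs_mult.
  pose proof (Rabs_pos d0). pose proof (Rabs_pos e1).
  assert (A1 : Rabs (y + S + e1) <= 3 + kap).
  { apply Rabs_le. apply Rabs_def2b in He. split; lra. }
  assert (A2 : Rabs (S - kap + e1) <= r + dl1).
  { apply Rabs_le. apply Rabs_def2b in He. split; lra. }
  rewrite (Rabs_right y) by lra.
  assert (Rabs d0 * Rabs (y + S + e1) <= dl0 * (3 + kap)) by (apply Rmult_le_compat; auto; apply Rabs_pos).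
  assert (y * Rabs (S - kap + e1) <= 2 * (r + dl1)) by (apply Rmult_le_compat; auto; try lra; apply Rabs_pos).
  lra.
Qed.

Definition cst (kap : R) := (kap + sqrt (kap ^ 2 + 4)) / 2.

Lemma cst_facts kap : 0 <= kap -> 0 < cst kap /\ cst kap * cst kap = kap * cst kap + 1.
Proof.
  intros Hk. unfold cst. assert (Hs : 0 <= kap ^ 2 + 4) by nra.
  pose proof (sqrt_sqrt _ Hs) as E. pose proof (sqrt_pos (kap ^ 2 + 4)).
  assert (0 < sqrt (kap ^ 2 + 4)).
  { apply sqrt_lt_R0. nra. }
  split; [lra|]. nra.
Qed.

Lemma root_bound kap y : 0 <= kap -> 0 < y -> Rabs (y - / cst kap) <= cst kap * Rabs (y * y + kap * y - 1).
Proof.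
  intros Hk Hy. destruct (cst_facts kap Hk) as [Hc E]. set (c := cst kap) in *.
  set (ys := / c).
  assert (Hys : 0 < ys) by (unfold ys; apply Rinv_0_lt_compat; auto).
  assert (Eys : ys * ys + kap * ys - 1 = 0).
  { unfold ys. apply (Rmult_eq_reg_r (c * c)); [|nra]. field_simplify; [|lra]. nra. }
  replace (y * y + kap * y - 1) with ((y - ys) * (y + ys + kap)) by (rewrite <- (Rminus_0_r (y * y + kap * y - 1)), <- Eys; ring).
  rewrite Rabs_mult. rewrite (Rabs_right (y + ys + kap)) by lra.
  pose proof (Rabs_pos (y - ys)) as Pa.
  assert (Cy : c * ys = 1) by (unfold ys; field; lra).
  assert (Ra : Rabs (y - ys) = c * (Rabs (y - ys) * ys)) by (transitivity (Rabs (y - ys) * (c * ys)); [rewrite Cy; ring| ring]).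
  rewrite Ra at 1. apply Rmult_le_compat_l; [lra|]. apply Rmult_le_compat_l; lra.
Qed.

Lemma asym_of f g h : ev (fun b => f b / g b = h b) -> tends h 1 -> asym f g.
Proof. intros E T. pose proof (tends_ext _ _ _ (ev_mono _ _ E (fun b x => eq_sym x)) T) as T2. exact T2. Qed.

Lemma lim_of f h l : ev (fun b => f b = h b) -> tends h l -> lim_infty f l.
Proof. intros E T. pose proof (tends_ext _ _ _ (ev_mono _ _ E (fun b x => eq_sym x)) T) as T2. exact T2. Qed.

Lemma tends_0 f l : tends (fun b => f b - l) 0 -> tends f l.
Proof. intros T e He. apply (ev_mono _ _ (T e He)). intros b Hb. rewrite Rminus_0_r in Hb. auto. Qed.

Lemma tends_scal f a k : tends f a -> tends (fun b => k * f b) (k * a).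
Proof. intros T. apply (tends_mult (fun _ => k) f k a); auto. apply tends_const. Qed.

Theorem mainTheorem14
  (H : Sigma -> R) (H0 H1 : nat -> R) (Hinf0 Hinf1 : R) (kappa : nat)
  (lam : R -> R) (Phi : R -> Sigma -> R) (nu : R -> (Sigma -> R) -> R) :
  reduced_double_well H H0 H1 ->
  Un_cv H0 Hinf0 -> Un_cv H1 Hinf1 ->
  Hinf0 <= Hinf1 ->
  0 < (Hinf1 + Hinf0) / 2 ->
  (forall n, (1 <= n)%nat -> (Hinf1 + Hinf0) / 2 <= H1 n + Hinf0) ->
  (exists l : list nat, NoDup l /\ length l = kappa /\
     forall n, In n l <-> ((1 <= n)%nat /\ (Hinf1 + Hinf0) / 2 = H1 n + Hinf0)) ->
  (forall beta, 0 < beta -> is_eigenfunction H beta (lam beta) (Phi beta)) ->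
  (forall beta, 0 < beta -> is_eigenmeasure H beta (lam beta) (nu beta)) ->
  let gamma := (Hinf0 + Hinf1) / 2 in
  let c := (INR kappa + sqrt (INR kappa ^ 2 + 4)) / 2 in
  asym (fun b => lam b - 1) (fun b => c * exp (- b * gamma)) /\
  asym (fun b => Fb H0 b (lam b)) (fun b => exp (- b * Hinf0) / (lam b - 1)) /\
  asym (fun b => exp (- b * Hinf0) / (lam b - 1))
       (fun b => / c * exp (b * (Hinf1 - Hinf0) / 2)) /\
  asym (fun b => Ftb H0 b (lam b)) (fun b => exp (- b * Hinf0) / (lam b - 1) ^ 2) /\
  asym (fun b => exp (- b * Hinf0) / (lam b - 1) ^ 2)
       (fun b => / c ^ 2 * exp (b * Hinf1)) /\
  asym (fun b => Fb H1 b (lam b)) (fun b => c * exp (- b * (Hinf1 - Hinf0) / 2)) /\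
  asym (fun b => Ftb H1 b (lam b)) (fun b => exp (- b * Hinf1) / (lam b - 1) ^ 2) /\
  asym (fun b => exp (- b * Hinf1) / (lam b - 1) ^ 2)
       (fun b => / c ^ 2 * exp (b * Hinf0)) /\
  lim_infty (fun b => mu_cyl (Phi b) (nu b) false / mu_cyl (Phi b) (nu b) true) (/ c ^ 2).
Proof.
  intros R C0 C1 Hle Hg Hmin Hlist Heigf Heigm gamma c.
  destruct Hlist as [l [Nd [Hlen Hl]]].
  assert (Gg : gamma = gam Hinf0 Hinf1) by reflexivity.
  assert (Hgam : 0 < gam Hinf0 Hinf1) by (unfold gam; lra).
  set (kap := INR kappa).
  assert (Hk : 0 <= kap) by apply pos_INR.
  assert (Hc : c = cst kap) by reflexivity.
  destruct (cst_facts kap Hk) as [Hcp Hce].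
  rewrite <- Hc in Hcp, Hce.
  pose proof R as [_ [_ [_ [_ [_ [_ [P0 [P1 [[w0 [Hw0 [W0 HW0]]] [w1 [Hw1 [W1 HW1]]]]]]]]]]]].
  assert (Hw0' : forall k, (1 <= k)%nat -> Rabs (H0 k - Hinf0) <= w0 k).
  { intros k Hk1. apply (limit_bound H0 Hinf0 k (w0 k) C0). intros n; apply Hw0; auto. }
  assert (Hw1' : forall k, (1 <= k)%nat -> Rabs (H1 k - Hinf1) <= w1 k).
  { intros k Hk1. apply (limit_bound H1 Hinf1 k (w1 k) C1). intros n; apply Hw1; auto. }
  destruct (gap_lemma H0 Hinf0 (Hinf0 - gam Hinf0 Hinf1) (fun _ => True) C0) as [eta0 [He0 [Hm0 Hm0']]].
  { intros k Hk1 _. specialize (P0 k Hk1). unfold gam. lra. }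
  { unfold gam. lra. }
  destruct (gap_lemma H1 Hinf1 (gam Hinf0 Hinf1 - Hinf0) (fun k => ~ In k l) C1) as [eta1 [He1 [Hm1 Hm1']]].
  { intros k Hk1 Hn. specialize (Hmin k Hk1). destruct (Rle_lt_or_eq _ _ Hmin) as [Q|Q].
    - unfold gam. lra.
    - exfalso. apply Hn. apply Hl. split; auto. }
  { unfold gam. lra. }
  destruct (list_maxK l) as [K HK].
  assert (Hl' : forall k, In k l -> (1 <= k)%nat /\ (k <= K)%nat /\ H1 k = gam Hinf0 Hinf1 - Hinf0).
  { intros k Hk1. destruct (proj1 (Hl k) Hk1) as [A B]. repeat split; auto. unfold gam. lra. }
  assert (Hkap : kap = INR (length l)) by (unfold kap; rewrite Hlen; auto).
  assert (PB := fun b (Hb : 0 < b) => perbeta H H0 H1 Hinf0 Hinf1 b (lam b) (nu b) (Phi b) l K w0 W0 w1 W1 eta0 eta1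
     R C0 C1 Hb (Heigm b Hb) (Heigf b Hb) Hle Hgam Nd Hl' Hw0' HW0 Hw1' HW1 He0 (fun k Hk1 => Hm0 k Hk1 I) Hm0' He1 Hm1 Hm1').
  cbv zeta in PB. rewrite <- Hkap in PB.
  assert (EA : forall b, exp (- b * Hinf0) = A0v Hinf0 Hinf1 b * Ev Hinf0 Hinf1 b) by (intros; unfold A0v, Ev; expeq).
  assert (EB : forall b, exp (- b * Hinf1) * A0v Hinf0 Hinf1 b = Ev Hinf0 Hinf1 b) by (intros; unfold A0v, Ev; expeq).
  assert (EC : forall b, exp (b * (Hinf1 - Hinf0) / 2) = A0v Hinf0 Hinf1 b) by (intros; unfold A0v; f_equal; unfold gam; field).
  assert (ED : forall b, exp (- b * (Hinf1 - Hinf0) / 2) * A0v Hinf0 Hinf1 b = 1) by (intros; unfold A0v; rewrite exp_lin, <- exp_0; f_equal; unfold gam; field).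
  assert (EE : forall b, exp (b * Hinf1) * Ev Hinf0 Hinf1 b = A0v Hinf0 Hinf1 b) by (intros; unfold A0v, Ev; expeq).
  assert (EF : forall b, exp (b * Hinf0) * (A0v Hinf0 Hinf1 b * Ev Hinf0 Hinf1 b) = 1) by (intros; rewrite <- EA, exp_lin, <- exp_0; f_equal; ring).
  assert (EG : forall b, exp (- b * gamma) = Ev Hinf0 Hinf1 b) by reflexivity.
  pose (yf := fun b => yv Hinf0 Hinf1 b (lam b)).
  pose (d0f := fun b => d0v H0 Hinf0 Hinf1 b (lam b)).
  pose (E0f := fun b => e0v H0 Hinf0 b (lam b)).
  pose (E1f := fun b => e1v H1 Hinf1 b (lam b)).
  pose (Ef := fun b => Ev Hinf0 Hinf1 b).
  pose (s0 := fun b => W0 * (b * exp (- b * eta0))).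
  pose (s1 := fun b => W1 * (b * exp (- b * eta1)) + kap * Ef b).
  assert (W0p : 0 <= W0).
  { apply is_series_Reals in HW0. apply is_series_Reals in HW0. pose proof (infsum_ge _ _ O HW0) as G. simpl in G.
    assert (forall n, 0 <= w0 (S n)) by (intros n; eapply Rle_trans; [apply Rabs_pos| apply Hw0'; lia]).
    specialize (G H2). specialize (H2 O). lra. }
  assert (W1p : 0 <= W1).
  { pose proof (infsum_ge _ _ O HW1) as G. simpl in G.
    assert (forall n, 0 <= w1 (S n)) by (intros n; eapply Rle_trans; [apply Rabs_pos| apply Hw1'; lia]).
    specialize (G H2). specialize (H2 O). lra. }
  assert (TEf : tends Ef 0) by (apply (tends_exp_decay _ Hgam)).
  assert (Ts0 : tends s0 0).
  { pose proof (tends_scal _ _ W0 (tends_b_exp_decay _ He0)) as T. rewrite Rmult_0_r in T. exact T. }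
  assert (Ts1 : tends s1 0).
  { pose proof (tends_plus _ _ _ _ (tends_scal _ _ W1 (tends_b_exp_decay _ He1)) (tends_scal _ _ kap TEf)) as T.
    rewrite !Rmult_0_r, Rplus_0_r in T. exact T. }
  set (ds := / (2 * kap + 4)).
  assert (Hds : 0 < ds) by (unfold ds; apply Rinv_0_lt_compat; lra).
  assert (Hds4 : ds <= 1/4) by (unfold ds; apply Rmult_le_reg_r with (2 * kap + 4); [lra|]; rewrite Rinv_l by lra; lra).
  pose (rf := fun b => kap * INR K * (2 * kap + 4) * Ef b).
  pose (bnd := fun b => c * (s0 b * (3 + kap) + 2 * (rf b + s1 b))).
  pose (b1 := fun b => W1 * (b * exp (- b * eta1)) * (2 * kap + 4) + 2 * kap * INR K * Ef b * (2 * kap + 4) ^ 2).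
  assert (Key : ev (fun b => 0 < b /\ ds <= yf b <= 2 /\ Rabs (yf b - / c) <= bnd b /\ Rabs (d0f b) <= s0 b /\
     Rabs (E0f b) <= s0 b * (2 * kap + 4) /\ Rabs (E1f b) <= b1 b /\ lam b = 1 + Ef b / yf b /\
     Fb H0 b (lam b) = A0v Hinf0 Hinf1 b * (yf b + d0f b) /\ Fb H1 b (lam b) = / (A0v Hinf0 Hinf1 b * (yf b + d0f b)) /\
     0 < yf b + d0f b /\
     mu_cyl (Phi b) (nu b) false / mu_cyl (Phi b) (nu b) true = (yf b + d0f b) ^ 2 * (lam b + E1f b) / (lam b + E0f b))).
  { pose proof (tends_plus _ _ _ _ Ts0 Ts1 ds Hds) as T. rewrite Rplus_0_r in T.
    apply (ev_mono _ _ (ev_and _ _ (ev_ge 1) (ev_and _ _ T (ev_and _ _ (Ts0 1 Rlt_0_1) (Ts1 1 Rlt_0_1))))).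
    intros b [Hb1 [Hsm [Hs0 Hs1]]]. rewrite Rminus_0_r in Hsm, Hs0, Hs1.
    assert (Hb : 0 < b) by lra.
    destruct (PB b Hb) as [Hl1 [Hy [Eq [Pd [Pe [Bd0 [[BS1 BS2] [BS3 [Be1 [Be0 [Be1' [F1eq Mu]]]]]]]]]]]].
    fold (yf b) (d0f b) (E0f b) (E1f b) in *.
    assert (s0p : 0 <= s0 b) by (unfold s0; apply Rmult_le_pos; auto; apply Rmult_le_pos; [lra| left; apply exp_pos]).
    assert (Efp : 0 < Ef b) by apply exp_pos.
    assert (s1p : 0 <= s1 b) by (unfold s1; apply Rplus_le_le_0_compat; [apply Rmult_le_pos; auto; apply Rmult_le_pos; [lra| left; apply exp_pos]| apply Rmult_le_pos; lra]).
    rewrite Rabs_right in Hsm by lra.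
    assert (Bd0' : Rabs (d0f b) <= s0 b + s1 b) by (unfold s0; unfold s0 in s0p; lra).
    assert (Be1a : Rabs (eps1v H1 Hinf0 Hinf1 l b (lam b)) <= s0 b + s1 b) by (unfold s1, Ef; unfold s0, s1, Ef in *; lra).
    destruct (ybounds kap (yf b) (d0f b) (SlD l (lam b)) (eps1v H1 Hinf0 Hinf1 l b (lam b)) (s0 b + s1 b) Hk Hy
      (conj BS1 BS2) Bd0' Be1a ltac:(unfold ds in Hsm; lra) Eq Pd Pe) as [Ylo Yhi]. fold ds in Ylo.
    assert (Hlam : lam b = 1 + Ef b / yf b) by (unfold yf, yv, Ef, Ev; pose proof (exp_pos (- b * gam Hinf0 Hinf1)); field; split; lra).
    assert (Yup : yf b <= 2) by lra.
    assert (Lm1 : lam b - 1 <= Ef b * (2 * kap + 4)).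
    { rewrite Hlam. replace (1 + Ef b / yf b - 1) with (Ef b * / yf b) by (field; lra).
      apply Rmult_le_compat_l; [lra|]. replace (2 * kap + 4) with (/ ds) by (unfold ds; field; lra).
      apply Rinv_le_contravar; lra. }
    assert (Sr : kap - rf b <= SlD l (lam b)).
    { eapply Rle_trans; [|exact BS3]. rewrite <- pow_inv.
      pose proof (bern_q (/ lam b) K) as Bq.
      assert (0 <= / lam b <= 1) by (split; [left; apply Rinv_0_lt_compat; lra| left; apply inv_lt1; lra]).
      specialize (Bq H2).
      assert (1 - / lam b <= lam b - 1).
      { replace (1 - / lam b) with ((lam b - 1) * / lam b) by (field; lra).
        rewrite <- (Rmult_1_r (lam b - 1)) at 2. apply Rmult_le_compat_l; lra. }
      unfold rf. pose proof (pos_INR K).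
      assert (INR K * (1 - / lam b) <= INR K * (Ef b * (2 * kap + 4))) by (apply Rmult_le_compat_l; lra).
      assert (kap * (1 - INR K * (1 - / lam b)) <= kap * (/ lam b) ^ K) by (apply Rmult_le_compat_l; lra).
      nra. }
    assert (Bp : Rabs (yf b * yf b + kap * yf b - 1) <= s0 b * (3 + kap) + 2 * (rf b + s1 b)).
    { apply (pquad kap (yf b) (d0f b) (SlD l (lam b)) (eps1v H1 Hinf0 Hinf1 l b (lam b)) (s0 b) (s1 b) (rf b)); auto; try lra.
      - unfold s0. lra.
      - unfold s1, Ef. unfold s1, Ef in Be1. lra. }
    assert (Bq : Rabs (yf b - / c) <= bnd b).
    { rewrite Hc. eapply Rle_trans; [apply root_bound; auto|]. unfold bnd. rewrite <- Hc.
      apply Rmult_le_compat_l; lra. }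
    assert (Hy1 : / yf b <= 2 * kap + 4).
    { replace (2 * kap + 4) with (/ ds) by (unfold ds; field; lra). apply Rinv_le_contravar; lra. }
    assert (Bd0s : Rabs (d0f b) <= s0 b) by (unfold s0; replace (W0 * (b * exp (- b * eta0))) with (b * W0 * exp (- b * eta0)) by ring; auto).
    repeat split; auto; try lra.
    - eapply Rle_trans; [exact Be0|].
      replace (b * W0 * exp (- b * eta0) / yf b) with (s0 b * / yf b) by (unfold s0, Rdiv; ring). apply Rmult_le_compat_l; auto.
    - eapply Rle_trans; [exact Be1'|]. unfold b1. fold (Ef b).
      assert (0 <= b * W1 * exp (- b * eta1)) by (apply Rmult_le_pos; [apply Rmult_le_pos; lra| left; apply exp_pos]).
      assert (/ yf b ^ 2 <= (2 * kap + 4) ^ 2).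
      { rewrite <- pow_inv. apply pow_incr. split; [left; apply Rinv_0_lt_compat; lra| auto]. }
      assert (0 <= 2 * kap * INR K * Ef b) by (pose proof (pos_INR K); apply Rmult_le_pos; [nra| lra]).
      unfold Rdiv. apply Rplus_le_compat.
      + replace (W1 * (b * exp (- b * eta1)) * (2 * kap + 4)) with (b * W1 * exp (- b * eta1) * (2 * kap + 4)) by ring.
        apply Rmult_le_compat_l; auto.
      + apply Rmult_le_compat_l; auto.
    - unfold d0f, d0v. fold (yf b). field. apply Rgt_not_eq, exp_pos. }
  assert (Trf : tends rf 0) by (pose proof (tends_scal _ _ (kap * INR K * (2 * kap + 4)) TEf) as T; rewrite Rmult_0_r in T; exact T).
  assert (Tbnd : tends bnd 0).
  { pose proof (tends_scal _ _ c (tends_plus _ _ _ _ (tends_mult _ _ _ _ Ts0 (tends_const (3 + kap))) (tends_scal _ _ 2 (tends_plus _ _ _ _ Trf Ts1)))) as T.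
    replace (c * (0 * (3 + kap) + 2 * (0 + 0))) with 0 in T by ring. exact T. }
  assert (Ty : tends yf (/ c)).
  { apply tends_0. apply (tends_squeeze _ bnd); auto. apply (ev_mono _ _ Key). intros b Hb; apply Hb. }
  assert (Td0 : tends d0f 0) by (apply (tends_squeeze _ s0); auto; apply (ev_mono _ _ Key); intros b Hb; apply Hb).
  assert (TE0 : tends E0f 0).
  { apply (tends_squeeze _ (fun b => s0 b * (2 * kap + 4))). apply (ev_mono _ _ Key); intros b Hb; apply Hb.
    pose proof (tends_mult _ _ _ _ Ts0 (tends_const (2 * kap + 4))) as T. rewrite Rmult_0_l in T. exact T. }
  assert (TE1 : tends E1f 0).
  { apply (tends_squeeze _ b1). apply (ev_mono _ _ Key); intros b Hb; apply Hb.
    pose proof (tends_plus _ _ _ _ (tends_mult _ _ _ _ (tends_scal _ _ W1 (tends_b_exp_decay _ He1)) (tends_const (2 * kap + 4)))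
      (tends_mult _ _ _ _ (tends_scal _ _ (2 * kap * INR K) TEf) (tends_const ((2 * kap + 4) ^ 2)))) as T.
    replace (W1 * 0 * (2 * kap + 4) + 2 * kap * INR K * 0 * (2 * kap + 4) ^ 2) with 0 in T by ring.
    eapply tends_ext; [|exact T]. exists 0. intros b _. unfold b1. ring. }
  assert (Hcn : c <> 0) by lra.
  assert (Tiy : tends (fun b => / yf b) c).
  { pose proof (tends_inv _ _ Ty (Rinv_neq_0_compat _ Hcn)) as T. rewrite Rinv_inv in T. exact T. }
  assert (Tlam : tends lam 1).
  { eapply tends_ext; [|pose proof (tends_plus _ _ _ _ (tends_const 1) (tends_mult _ _ _ _ TEf Tiy)) as T; rewrite Rmult_0_l, Rplus_0_r in T; exact T].
    apply (ev_mono _ _ Key). intros b Hb. symmetry. destruct Hb as [_ [_ [_ [_ [_ [_ [E _]]]]]]]. rewrite E. unfold Rdiv. ring. }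
  assert (Pos : ev (fun b => 0 < yf b /\ 0 < yf b + d0f b /\ 0 < Ef b /\ 0 < A0v Hinf0 Hinf1 b /\ lam b - 1 = Ef b / yf b)).
  { apply (ev_mono _ _ Key). intros b [Hb [[Y1 Y2] [_ [_ [_ [_ [E [_ [_ [P _]]]]]]]]]].
    repeat split; try lra; try apply exp_pos. }
  repeat split.
  - apply (asym_of _ _ (fun b => / (c * yf b))).
    + apply (ev_mono _ _ (ev_and _ _ Pos Key)). intros b [[Y [_ [Ep [_ El]]]] _]. rewrite El, EG. fold (Ef b). field. repeat split; lra.
    + pose proof (tends_inv _ _ (tends_scal _ _ c Ty) ltac:(rewrite Rinv_r; lra)) as T. rewrite Rinv_r, Rinv_1 in T by lra. exact T.
  - apply (asym_of _ _ (fun b => (yf b + d0f b) * / yf b)).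
    + apply (ev_mono _ _ (ev_and _ _ Pos Key)). intros b [[Y [Yd [Ep [Ap El]]]] [_ [_ [_ [_ [_ [_ [_ [F0 _]]]]]]]]].
      rewrite F0, El, EA. fold (Ef b). field. repeat split; lra.
    + pose proof (tends_mult _ _ _ _ (tends_plus _ _ _ _ Ty Td0) Tiy) as T. rewrite Rplus_0_r, Rinv_l in T by lra. exact T.
  - apply (asym_of _ _ (fun b => c * yf b)).
    + apply (ev_mono _ _ Pos). intros b [Y [Yd [Ep [Ap El]]]]. rewrite El, EA, EC. fold (Ef b). field. repeat split; lra.
    + pose proof (tends_scal _ _ c Ty) as T. rewrite Rinv_r in T by lra. exact T.
  - apply (asym_of _ _ (fun b => lam b + E0f b)).
    + apply (ev_mono _ _ Pos). intros b [Y [Yd [Ep [Ap El]]]]. unfold E0f, e0v. ring.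
    + pose proof (tends_plus _ _ _ _ Tlam TE0) as T. rewrite Rplus_0_r in T. exact T.
  - apply (asym_of _ _ (fun b => c ^ 2 * yf b ^ 2)).
    + apply (ev_mono _ _ Pos). intros b [Y [Yd [Ep [Ap El]]]]. rewrite El, EA.
      replace (exp (b * Hinf1)) with (A0v Hinf0 Hinf1 b / Ef b) by (unfold Ef; rewrite <- EE; field; apply Rgt_not_eq, exp_pos).
      fold (Ef b). field. repeat split; lra.
    + pose proof (tends_mult _ _ _ _ (tends_const (c ^ 2)) (tends_mult _ _ _ _ Ty Ty)) as T.
      eapply tends_ext; [|replace 1 with (c ^ 2 * (/ c * / c)) by (field; lra); exact T]. exists 0. intros; simpl; ring.
  - apply (asym_of _ _ (fun b => / (c * (yf b + d0f b)))).
    + apply (ev_mono _ _ (ev_and _ _ Pos Key)). intros b [[Y [Yd [Ep [Ap El]]]] [_ [_ [_ [_ [_ [_ [_ [_ [F1 _]]]]]]]]]].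
      rewrite F1. replace (exp (- b * (Hinf1 - Hinf0) / 2)) with (/ A0v Hinf0 Hinf1 b) by (apply (Rmult_eq_reg_r (A0v Hinf0 Hinf1 b)); [rewrite Rinv_l by lra; rewrite ED; reflexivity| lra]).
      field. repeat split; lra.
    + pose proof (tends_inv _ _ (tends_scal _ _ c (tends_plus _ _ _ _ Ty Td0)) ltac:(rewrite Rplus_0_r, Rinv_r; lra)) as T.
      rewrite Rplus_0_r, Rinv_r, Rinv_1 in T by lra. exact T.
  - apply (asym_of _ _ (fun b => lam b + E1f b)).
    + apply (ev_mono _ _ Pos). intros b [Y [Yd [Ep [Ap El]]]]. unfold E1f, e1v. ring.
    + pose proof (tends_plus _ _ _ _ Tlam TE1) as T. rewrite Rplus_0_r in T. exact T.
  - apply (asym_of _ _ (fun b => c ^ 2 * yf b ^ 2)).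
    + apply (ev_mono _ _ Pos). intros b [Y [Yd [Ep [Ap El]]]]. rewrite El.
      replace (exp (- b * Hinf1)) with (Ef b / A0v Hinf0 Hinf1 b) by (unfold Ef; rewrite <- EB; field; lra).
      assert (AE : 0 < A0v Hinf0 Hinf1 b * Ef b) by nra. replace (exp (b * Hinf0)) with (/ (A0v Hinf0 Hinf1 b * Ef b)) by (apply (Rmult_eq_reg_r (A0v Hinf0 Hinf1 b * Ef b)); [rewrite Rinv_l by lra; unfold Ef; rewrite EF; reflexivity| lra]).
      field. repeat split; lra.
    + pose proof (tends_mult _ _ _ _ (tends_const (c ^ 2)) (tends_mult _ _ _ _ Ty Ty)) as T.
      eapply tends_ext; [|replace 1 with (c ^ 2 * (/ c * / c)) by (field; lra); exact T]. exists 0. intros; simpl; ring.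
  - apply (lim_of _ (fun b => (yf b + d0f b) ^ 2 * (lam b + E1f b) * / (lam b + E0f b))).
    + apply (ev_mono _ _ Key). intros b Hb. destruct Hb as [_ [_ [_ [_ [_ [_ [_ [_ [_ [_ M]]]]]]]]]]. rewrite M. unfold Rdiv. auto.
    + pose proof (tends_mult _ _ _ _ (tends_mult _ _ _ _ (tends_mult _ _ _ _ (tends_plus _ _ _ _ Ty Td0) (tends_plus _ _ _ _ Ty Td0)) (tends_plus _ _ _ _ Tlam TE1))
        (tends_inv _ _ (tends_plus _ _ _ _ Tlam TE0) ltac:(lra))) as T.
      replace (/ c ^ 2) with ((/ c + 0) * (/ c + 0) * (1 + 0) * / (1 + 0)) by (field; lra).
      eapply tends_ext; [|exact T]. exists 0. intros; simpl; ring.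
Qed.
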